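(* Let $\mathbf{k}=(k_1,\ldots,k_n)$ be an admissible index and $\beta\in\mathbb{C}$ with $\mathrm{Re}\,\beta>0$. Let $D(\beta)=\{\alpha\in\mathbb{C}:|\alpha-\beta|<\mathrm{Re}\,\beta/2\}$. Then the series \[ \sum_{l=0}^{\infty}(\alpha-\beta)^l\sum_{i=0}^{l}\sum_{\substack{i_1+\cdots+i_{n-1}=i\\ i_j\in\mathbb{Z}_{\ge0}}}S_{l-i}(k_1,\{1\}^{i_1},k_2,\ldots,k_{n-1},\{1\}^{i_{n-1}},k_n;\alpha) \] and \[ \sum_{l=0}^{\infty}(\alpha-\beta)^l\sum_{i=0}^{l}\sum_{\mathbf{i}^{(1)}_{k_1-1}+\cdots+\mathbf{i}^{(n)}_{k_n-2}=i}S_{l-i}\bigl(k_1+\mathbf{i}^{(1)}_{k_1-1},\ldots,k_{n-1}+\mathbf{i}^{(n-1)}_{k_{n-1}-1},k_n+\mathbf{i}^{(n)}_{k_n-2};\alpha\bigr) \] converge absolutely for $\alpha\in D(\beta)$ and uniformly on every compact subset of $D(\beta)$.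
   Context: An index $(k_1,\ldots,k_n)$ is admissible if all $k_i$ are positive integers and $k_n\ge2$. For $a\in\mathbb{C}$, $(a)_0=1$ and $(a)_m=a(a+1)\cdots(a+m-1)$ for $m\ge1$. For an admissible index and $\mathrm{Re}\,\alpha>0$, \[ Z(\mathbf{k};\alpha)=\sum_{0\le m_1<\cdots<m_n}\frac{(\alpha)_{m_1}}{m_1!}\frac{m_n!}{(\alpha)_{m_n+1}}\frac{1}{(m_1+\alpha)^{k_1}\cdots(m_{n-1}+\alpha)^{k_{n-1}}(m_n+\alpha)^{k_n-1}}, \] and $S_l(\mathbf{k};\alpha):=\sum_{l_1+\cdots+l_n=l,\ l_i\in\mathbb{Z}_{\ge0}}Z(k_1+l_1,\ldots,k_n+l_n;\alpha)$. $\{1\}^a$ denotes $a$ consecutive entries equal to $1$. For $m\ge1$, $r\ge0$, $\mathbf{i}^{(m)}_r:=i^{(m)}_1+\cdots+i^{(m)}_r$ (equal to $0$ if $r=0$); the sum over $\mathbf{i}^{(1)}_{k_1-1}+\cdots+\mathbf{i}^{(n)}_{k_n-2}=i$ runs over all tuples of nonnegative integers $(i^{(1)}_1,\ldots,i^{(1)}_{k_1-1},\ldots,i^{(n)}_1,\ldots,i^{(n)}_{k_n-2})$ with total sum $i$. *)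

(* Defs.v *)
From Stdlib Require Import Reals List Arith.
From Coquelicot Require Import Coquelicot.
Import ListNotations.
Open Scope R_scope.

Definition clsum (s : list C) : C := fold_right Cplus (RtoC 0) s.
Definition csum (f : nat -> C) (n : nat) : C := clsum (map f (seq 0 n)).

Fixpoint poch (a : C) (m : nat) : C :=
  match m with
  | O => RtoC 1
  | S m' => Cmult (poch a m') (Cplus a (RtoC (INR m')))
  end.

Definition cfact (m : nat) : C := RtoC (INR (fact m)).

Definition admissible (k : list nat) : Prop :=
  k <> [] /\ (forall x, In x k -> (1 <= x)%nat) /\ (2 <= last k 0%nat)%nat.

(* For ks = [k_r; ...; k_1] (reversed) and m,
   lower alpha ks m = sum_{0<=m_1<...<m_r<m} (alpha)_{m_1}/m_1!
                       * prod_{j=1}^r 1/(m_j+alpha)^{k_j},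
   and for r = 0 it is (alpha)_m/m!. *)
Fixpoint lower (alpha : C) (ks : list nat) (m : nat) : C :=
  match ks with
  | [] => Cdiv (poch alpha m) (cfact m)
  | k :: ks' =>
      csum (fun j => Cmult (Cinv (Cpow (Cplus (RtoC (INR j)) alpha) k))
                           (lower alpha ks' j)) m
  end.

(* the m_n-th term of the series defining Z(k;alpha) *)
Definition Zterm (k : list nat) (alpha : C) (m : nat) : C :=
  Cmult (Cdiv (cfact m) (poch alpha (S m)))
   (Cmult (Cinv (Cpow (Cplus (RtoC (INR m)) alpha) (pred (last k 0%nat))))
          (lower alpha (rev (removelast k)) m)).

(* Z(k;alpha) = sum over 0<=m_1<...<m_n; summed by m_n (the inner sums
   over m_1<...<m_{n-1}<m_n are finite).  The complex value of the series
   is taken componentwise with Coquelicot's Series. *)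
Definition Zfun (k : list nat) (alpha : C) : C :=
  (Series (fun m => fst (Zterm k alpha m)), Series (fun m => snd (Zterm k alpha m))).

Fixpoint comps (n l : nat) : list (list nat) :=
  match n with
  | O => match l with O => [[]] | _ => [] end
  | S n' => flat_map (fun j => map (cons j) (comps n' (l - j))) (seq 0 (S l))
  end.

Fixpoint addl (k t : list nat) : list nat :=
  match k, t with
  | x :: k', y :: t' => (x + y)%nat :: addl k' t'
  | _, _ => k
  end.

Definition Ssum (l : nat) (k : list nat) (alpha : C) : C :=
  clsum (map (fun t => Zfun (addl k t) alpha) (comps (length k) l)).

(* (k_1,{1}^{i_1},k_2,...,k_{n-1},{1}^{i_{n-1}},k_n) for is = [i_1;...;i_{n-1}] *)
Fixpoint ins_ones (k is : list nat) : list nat :=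
  match k with
  | [] => []
  | [x] => [x]
  | x :: k' => x :: repeat 1%nat (hd 0%nat is) ++ ins_ones k' (tl is)
  end.

Definition coef1 (k : list nat) (alpha : C) (l : nat) : C :=
  csum (fun i =>
    clsum (map (fun is => Ssum (l - i) (ins_ones k is) alpha)
               (comps (pred (length k)) i))) (S l).

Fixpoint blocks (bl t : list nat) : list nat :=
  match bl with
  | [] => []
  | b :: bl' => list_sum (firstn b t) :: blocks bl' (skipn b t)
  end.

Definition blens (k : list nat) : list nat :=
  map (fun x => (x - 1)%nat) (removelast k) ++ [(last k 0%nat - 2)%nat].

(* inner coefficient of the second series: sum over all tuples
   (i^{(1)}_1,...,i^{(n)}_{k_n-2}) of total sum i *)
Definition coef2 (k : list nat) (alpha : C) (l : nat) : C :=
  csum (fun i =>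
    clsum (map (fun t => Ssum (l - i) (addl k (blocks (blens k) t)) alpha)
               (comps (list_sum (blens k)) i))) (S l).

Definition sterm (coef : list nat -> C -> nat -> C) (k : list nat) (beta alpha : C)
  (l : nat) : C := Cmult (Cpow (Cminus alpha beta) l) (coef k alpha l).

Definition compactC (K : C -> Prop) : Prop :=
  forall (I : Type) (U : I -> C -> Prop),
    (forall i, open (U i)) -> (forall z, K z -> exists i, U i z) ->
    exists s : list I, forall z, K z -> exists i, In i s /\ U i z.

Definition unif_conv_series (K : C -> Prop) (a : nat -> C -> C) : Prop :=
  exists f : C -> C, forall eps : R, 0 < eps ->
    exists N : nat, forall n : nat, (N <= n)%nat -> forall z, K z ->
      Cmod (Cminus (f z) (csum (fun l => a l z) n)) < eps.

Definition Dbeta (beta : C) (alpha : C) : Prop :=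
  Cmod (Cminus alpha beta) < Re beta / 2.

(* Main.v *)
Require Import Defs.
From Stdlib Require Import Reals List Lra Lia Arith ZArith.
From Coquelicot Require Import Coquelicot.
Import ListNotations.
Open Scope R_scope.


Fixpoint lsum {A} (f : A -> R) (s : list A) : R :=
  match s with [] => 0 | x :: s' => f x + lsum f s' end.
Definition ssum (f : nat -> R) (n : nat) : R := lsum f (seq 0 n).

Lemma lsum_app {A} (f : A -> R) s t : lsum f (s ++ t) = lsum f s + lsum f t.
Proof. induction s; simpl; lra. Qed.
Lemma lsum_map {A B} (f : B -> R) (g : A -> B) s : lsum f (map g s) = lsum (fun x => f (g x)) s.
Proof. induction s; simpl; congruence. Qed.
Lemma lsum_flat_map {A B} (f : B -> R) (g : A -> list B) s :
  lsum f (flat_map g s) = lsum (fun x => lsum f (g x)) s.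
Proof. induction s; simpl; rewrite ?lsum_app; congruence. Qed.
Lemma lsum_plus {A} (f g : A -> R) s : lsum (fun x => f x + g x) s = lsum f s + lsum g s.
Proof. induction s; simpl; lra. Qed.
Lemma lsum_scal {A} (c : R) (f : A -> R) s : lsum (fun x => c * f x) s = c * lsum f s.
Proof. induction s; simpl; lra. Qed.
Lemma lsum_ext {A} (f g : A -> R) s : (forall x, In x s -> f x = g x) -> lsum f s = lsum g s.
Proof. induction s; simpl; intros H; auto. rewrite H, IHs; auto. Qed.
Lemma lsum_le {A} (f g : A -> R) s : (forall x, In x s -> f x <= g x) -> lsum f s <= lsum g s.
Proof. induction s; simpl; intros H. lra. apply Rplus_le_compat. apply H; auto. apply IHs; auto. Qed.
Lemma lsum_nonneg {A} (f : A -> R) s : (forall x, In x s -> 0 <= f x) -> 0 <= lsum f s.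
Proof. intros H. apply Rle_trans with (lsum (fun _ => 0) s). clear H; induction s; simpl; lra. apply lsum_le; auto. Qed.
Lemma lsum_swap {A B} (g : A -> B -> R) s t :
  lsum (fun x => lsum (g x) t) s = lsum (fun y => lsum (fun x => g x y) s) t.
Proof.
  induction s; simpl. induction t; simpl; lra.
  rewrite IHs, <- lsum_plus. reflexivity.
Qed.

Lemma ssum_S f n : ssum f (S n) = ssum f n + f n.
Proof. unfold ssum. rewrite seq_S, lsum_app. simpl. lra. Qed.
Lemma ssum_0 f : ssum f 0 = 0.
Proof. reflexivity. Qed.
Lemma lsum_seq_shift f s n : lsum f (seq (S s) n) = lsum (fun i => f (S i)) (seq s n).
Proof. revert s; induction n; intros s; simpl; auto. rewrite IHn. reflexivity. Qed.
Lemma ssum_Sl f n : ssum f (S n) = f 0%nat + ssum (fun i => f (S i)) n.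
Proof. unfold ssum. simpl. rewrite lsum_seq_shift. reflexivity. Qed.
Lemma ssum_ext f g n : (forall i, (i < n)%nat -> f i = g i) -> ssum f n = ssum g n.
Proof. intros H; apply lsum_ext. intros x Hx; apply in_seq in Hx; apply H; lia. Qed.
Lemma ssum_le f g n : (forall i, (i < n)%nat -> f i <= g i) -> ssum f n <= ssum g n.
Proof. intros H; apply lsum_le. intros x Hx; apply in_seq in Hx; apply H; lia. Qed.
Lemma ssum_nonneg f n : (forall i, (i < n)%nat -> 0 <= f i) -> 0 <= ssum f n.
Proof. intros H; apply lsum_nonneg. intros x Hx; apply in_seq in Hx; apply H; lia. Qed.
Lemma ssum_mono f m n : (forall i, 0 <= f i) -> (m <= n)%nat -> ssum f m <= ssum f n.
Proof. intros H Hmn; induction Hmn. apply Rle_refl. rewrite ssum_S. specialize (H m0). lra. Qed.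
Lemma ssum_scal c f n : ssum (fun i => c * f i) n = c * ssum f n.
Proof. apply lsum_scal. Qed.
Lemma ssum_scal_r c f n : ssum f n * c = ssum (fun i => f i * c) n.
Proof. rewrite Rmult_comm, <- ssum_scal. apply ssum_ext; intros; ring. Qed.
Lemma ssum_plus f g n : ssum (fun i => f i + g i) n = ssum f n + ssum g n.
Proof. apply lsum_plus. Qed.

Lemma ssum_tri (g : nat -> nat -> R) L :
  ssum (fun s => ssum (fun j => g j (s - j)%nat) (S s)) L
  = ssum (fun j => ssum (g j) (L - j)) L.
Proof.
  induction L. reflexivity.
  rewrite ssum_S, IHL.
  transitivity (ssum (fun j => ssum (g j) (L - j) + g j (L - j)%nat) (S L)).
  - rewrite ssum_plus. rewrite ssum_S with (n:=L) (f := fun j => ssum (g j) (L - j)).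
    rewrite Nat.sub_diag, ssum_0. lra.
  - apply ssum_ext. intros i Hi. replace (S L - i)%nat with (S (L - i)) by lia.
    rewrite ssum_S. reflexivity.
Qed.

Lemma ssum_tri_le (g : nat -> nat -> R) L : (forall j s, 0 <= g j s) ->
  ssum (fun s => ssum (fun j => g j (s - j)%nat) (S s)) L
  <= ssum (fun j => ssum (g j) L) L.
Proof.
  intros H. rewrite ssum_tri. apply ssum_le. intros i Hi. apply ssum_mono; auto; lia.
Qed.

Lemma ssum_geom q n : 0 <= q < 1 -> ssum (fun j => q ^ j) n <= / (1 - q).
Proof.
  intros Hq. assert (H: ssum (fun j => q ^ j) n * (1 - q) = 1 - q ^ n).
  { induction n. unfold ssum; simpl; lra. rewrite ssum_S. simpl. nra. }
  assert (0 <= q ^ n) by (apply pow_le; lra).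
  apply Rmult_le_reg_r with (1 - q). lra. rewrite H, Rinv_l; lra.
Qed.

Fixpoint boxl (N L : nat) : list (list nat) :=
  match N with O => [[]] | S N' => flat_map (fun j => map (cons j) (boxl N' L)) (seq 0 L) end.

Lemma lsum_box_S f N L :
  lsum f (boxl (S N) L) = ssum (fun j => lsum (fun t => f (j :: t)) (boxl N L)) L.
Proof. simpl. rewrite lsum_flat_map. unfold ssum. apply lsum_ext. intros. apply lsum_map. Qed.

Lemma ssum_lsum_swap {A} (g : nat -> A -> R) n s :
  ssum (fun j => lsum (g j) s) n = lsum (fun x => ssum (fun j => g j x) n) s.
Proof. unfold ssum. apply lsum_swap. Qed.

Lemma ssum_zero n : ssum (fun _ => 0) n = 0.
Proof. induction n. reflexivity. rewrite ssum_S, IHn. lra. Qed.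

Lemma lsum_box_snoc f N L :
  lsum f (boxl (S N) L) = lsum (fun t => ssum (fun j => f (t ++ [j])) L) (boxl N L).
Proof.
  revert f. induction N; intros f.
  - rewrite lsum_box_S. simpl. rewrite Rplus_0_r. unfold ssum. apply lsum_ext. intros; simpl. lra.
  - rewrite lsum_box_S. rewrite lsum_box_S.
    apply ssum_ext. intros j _. rewrite (IHN (fun t => f (j :: t))). reflexivity.
Qed.

Lemma lsum_box_rev f N L :
  lsum (fun t => f (rev t)) (boxl N L) = lsum f (boxl N L).
Proof.
  revert f. induction N; intros f.
  - reflexivity.
  - rewrite lsum_box_S.
    rewrite (ssum_ext _ (fun j => lsum (fun t => f (t ++ [j])) (boxl N L))).
    2:{ intros j _. rewrite <- (IHN (fun t => f (t ++ [j]))). apply lsum_ext. intros; reflexivity. }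
    rewrite ssum_lsum_swap. rewrite lsum_box_snoc. reflexivity.
Qed.

Lemma box_length N L t : In t (boxl N L) -> length t = N.
Proof.
  revert t; induction N; intros t H; simpl in H.
  - destruct H as [<-|[]]; reflexivity.
  - apply in_flat_map in H. destruct H as [j [_ H]]. apply in_map_iff in H.
    destruct H as [t' [<- H]]. simpl. f_equal. auto.
Qed.

Lemma comps_S N s : comps (S N) s = flat_map (fun j => map (cons j) (comps N (s - j))) (seq 0 (S s)).
Proof. reflexivity. Qed.

Lemma comps_prop N s t : In t (comps N s) -> length t = N /\ list_sum t = s.
Proof.
  revert s t; induction N; intros s t H.
  - simpl in H. destruct s. destruct H as [<-|[]]; auto. destruct H.
  - rewrite comps_S in H. apply in_flat_map in H. destruct H as [j [Hj H]]. apply in_map_iff in H.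
    destruct H as [t' [<- H]]. apply in_seq in Hj. apply IHN in H. simpl. lia.
Qed.

Lemma comps_box f N L : (forall t, 0 <= f t) ->
  ssum (fun s => lsum f (comps N s)) L <= lsum f (boxl N L).
Proof.
  revert f L; induction N; intros f L Hf.
  - destruct L. simpl. unfold ssum; simpl. specialize (Hf []). lra.
    rewrite ssum_Sl. simpl. rewrite ssum_zero. specialize (Hf []). lra.
  - rewrite lsum_box_S.
    rewrite (ssum_ext _ (fun s => ssum (fun j => lsum (fun t => f (j :: t)) (comps N (s - j))) (S s))).
    2:{ intros s _. rewrite comps_S, lsum_flat_map. unfold ssum. apply lsum_ext. intros. apply lsum_map. }
    eapply Rle_trans.
    apply (ssum_tri_le (fun j s => lsum (fun t => f (j :: t)) (comps N s))).
    { intros; apply lsum_nonneg; auto. }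
    apply ssum_le. intros j _. apply IHN. auto.
Qed.

Lemma box_geom q N L :
  lsum (fun t => q ^ list_sum t) (boxl N L) = (ssum (fun j => q ^ j) L) ^ N.
Proof.
  induction N. simpl. lra.
  rewrite lsum_box_S.
  rewrite (ssum_ext _ (fun j => (ssum (fun j => q ^ j) L) ^ N * q ^ j)).
  - rewrite ssum_scal, <- tech_pow_Rmult. change (ssum (pow q) L) with (ssum (fun j => q ^ j) L). apply Rmult_comm.
  - intros j _. rewrite <- IHN, Rmult_comm, <- lsum_scal. apply lsum_ext. intros t _. simpl. rewrite pow_add. reflexivity.
Qed.

Fixpoint pochR (a : R) (m : nat) : R :=
  match m with O => 1 | S m' => pochR a m' * (a + INR m') end.
Definition xx (a : R) (j : nat) : R := / (INR j + a).
Definition uu (a : R) (j : nat) : R := pochR a j / INR (fact j).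
Fixpoint wlow (ws : list (nat -> R)) (g : nat -> R) (m : nat) : R :=
  match ws with [] => g m | w :: ws' => ssum (fun j => w j * wlow ws' g j) m end.
Definition xpow (a : R) (e : nat) : nat -> R := fun j => xx a j ^ e.
Definition pref (a : R) (m : nat) : R := INR (fact m) / pochR a (S m).
Definition Zr (a : R) (kr : list nat) (m : nat) : R :=
  pref a m * xx a m ^ pred (hd 0%nat kr) * wlow (map (xpow a) (tl kr)) (uu a) m.

Lemma pochR_pos a m : 0 < a -> 0 < pochR a m.
Proof. intros Ha; induction m; simpl. lra. apply Rmult_lt_0_compat; auto. pose proof (pos_INR m); lra. Qed.
Lemma xx_pos a j : 0 < a -> 0 < xx a j.
Proof. intros; unfold xx; apply Rinv_0_lt_compat; pose proof (pos_INR j); lra. Qed.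
Lemma uu_pos a j : 0 < a -> 0 < uu a j.
Proof. intros; unfold uu. apply Rdiv_lt_0_compat. apply pochR_pos; auto. apply lt_0_INR, lt_O_fact. Qed.
Lemma pref_pos a m : 0 < a -> 0 < pref a m.
Proof. intros; unfold pref. apply Rdiv_lt_0_compat. apply lt_0_INR, lt_O_fact. apply pochR_pos; auto. Qed.

Lemma wlow_nonneg ws g m : (forall w, In w ws -> forall j, 0 <= w j) -> (forall j, 0 <= g j) -> 0 <= wlow ws g m.
Proof.
  revert m; induction ws; intros m Hw Hg; simpl; auto.
  apply ssum_nonneg. intros i _. apply Rmult_le_pos. apply Hw; simpl; auto. apply IHws; auto.
  intros; apply Hw; simpl; auto.
Qed.

Lemma Zr_nonneg a kr m : 0 < a -> 0 <= Zr a kr m.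
Proof.
  intros Ha. unfold Zr. apply Rmult_le_pos. apply Rmult_le_pos. apply Rlt_le, pref_pos; auto.
  apply pow_le, Rlt_le, xx_pos; auto.
  apply wlow_nonneg. intros w Hw j. apply in_map_iff in Hw. destruct Hw as [e [<- _]].
  apply pow_le, Rlt_le, xx_pos; auto. intros; apply Rlt_le, uu_pos; auto.
Qed.

Section Cx.
Variable alpha : C.
Variable a : R.
Hypothesis Ha : 0 < a.
Hypothesis Hre : a <= Re alpha.

Lemma Cmod_shift j : a + INR j <= Cmod (Cplus alpha (RtoC (INR j))).
Proof.
  eapply Rle_trans. 2: apply re_le_Cmod. unfold Re. simpl. unfold Re in Hre.
  pose proof (pos_INR j). rewrite Rabs_right; lra.
Qed.
Lemma Cmod_shift' j : a + INR j <= Cmod (Cplus (RtoC (INR j)) alpha).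
Proof. rewrite Cplus_comm. apply Cmod_shift. Qed.

Lemma poch_cmp m d : Cmod (poch alpha m) * pochR a (m + d) <= pochR a m * Cmod (poch alpha (m + d)).
Proof.
  induction d. rewrite Nat.add_0_r; lra.
  rewrite Nat.add_succ_r. simpl. rewrite Cmod_mult.
  pose proof (Cmod_shift (m + d)). pose proof (pos_INR (m+d)).
  pose proof (Cmod_ge_0 (poch alpha m)). pose proof (pochR_pos a m Ha).
  pose proof (Cmod_ge_0 (poch alpha (m+d))). pose proof (pochR_pos a (m+d) Ha).
  apply Rle_trans with (pochR a m * Cmod (poch alpha (m + d)) * (a + INR (m + d))).
  rewrite <- Rmult_assoc. apply Rmult_le_compat_r; lra.
  rewrite Rmult_assoc. apply Rmult_le_compat_l; [lra|]. apply Rmult_le_compat_l; lra.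
Qed.

Lemma poch_nz m : poch alpha m <> 0%C.
Proof.
  apply Cmod_gt_0. pose proof (poch_cmp 0 m). simpl in H.
  rewrite Cmod_1 in H. pose proof (pochR_pos a m Ha). nra.
Qed.

Lemma shift_nz j : Cplus (RtoC (INR j)) alpha <> 0%C.
Proof. apply Cmod_gt_0. pose proof (Cmod_shift' j). pose proof (pos_INR j). lra. Qed.

Lemma Cmod_invpow j k : Cmod (Cinv (Cpow (Cplus (RtoC (INR j)) alpha) k)) <= xx a j ^ k.
Proof.
  rewrite Cmod_inv. rewrite Cmod_pow. unfold xx. rewrite <- pow_inv.
  apply pow_incr. split. apply Rlt_le, Rinv_0_lt_compat. pose proof (Cmod_shift' j); pose proof (pos_INR j); lra.
  apply Rinv_le_contravar. pose proof (pos_INR j); lra. pose proof (Cmod_shift' j); lra.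
  intros H. apply (f_equal Cmod) in H. rewrite Cmod_pow, Cmod_0 in H.
  assert (0 < Cmod (Cplus (RtoC (INR j)) alpha) ^ k). apply pow_lt. pose proof (Cmod_shift' j); pose proof (pos_INR j); lra. lra.
Qed.

Lemma Cmod_clsum {A} (f : A -> C) s : Cmod (clsum (map f s)) <= lsum (fun x => Cmod (f x)) s.
Proof.
  induction s; simpl. rewrite Cmod_0; lra.
  eapply Rle_trans. apply Cmod_triangle. lra.
Qed.
Lemma Cmod_csum f n : Cmod (csum f n) <= ssum (fun x => Cmod (f x)) n.
Proof. apply Cmod_clsum. Qed.

Lemma lower_cmp ks m M : (m <= S M)%nat ->
  Cmod (lower alpha ks m) * pochR a (S M) <= wlow (map (xpow a) ks) (uu a) m * Cmod (poch alpha (S M)).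
Proof.
  revert m M; induction ks; intros m M Hm.
  - cbn [lower wlow map]. assert (E: S M = (m + (S M - m))%nat) by lia. rewrite E. unfold Cdiv, cfact, uu. rewrite Cmod_mult, Cmod_inv, Cmod_R, Rabs_right.
    2: apply Rle_ge, pos_INR.
    2: { intro H. injection H. pose proof (lt_0_INR _ (lt_O_fact m)). lra. }
    pose proof (poch_cmp m (S M - m)). pose proof (lt_0_INR _ (lt_O_fact m)).
    unfold Rdiv. apply Rle_trans with (/ INR (fact m) * (Cmod (poch alpha m) * pochR a (m + (S M - m)))).
    right; ring. apply Rle_trans with (/ INR (fact m) * (pochR a m * Cmod (poch alpha (m + (S M - m))))).
    apply Rmult_le_compat_l; auto. apply Rlt_le, Rinv_0_lt_compat; auto. right; ring.
  - cbn [lower wlow map]. eapply Rle_trans. apply Rmult_le_compat_r. apply Rlt_le, pochR_pos; auto. apply Cmod_csum.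
    rewrite !ssum_scal_r. apply ssum_le. intros j Hj. cbn beta.
    rewrite Cmod_mult.
    pose proof (IHks j M ltac:(lia)). pose proof (Cmod_invpow j a0).
    pose proof (Cmod_ge_0 (lower alpha ks j)). pose proof (Cmod_ge_0 (poch alpha (S M))).
    pose proof (pochR_pos a (S M) Ha). pose proof (Cmod_ge_0 (Cinv (Cpow (Cplus (RtoC (INR j)) alpha) a0))).
    apply Rle_trans with (Cmod (Cinv (Cpow (Cplus (RtoC (INR j)) alpha) a0)) * (Cmod (lower alpha ks j) * pochR a (S M))).
    right; ring.
    apply Rle_trans with (xx a j ^ a0 * (wlow (map (xpow a) ks) (uu a) j * Cmod (poch alpha (S M)))).
    apply Rmult_le_compat; auto. apply Rmult_le_pos; auto. lra. change (xpow a a0 j) with (xx a j ^ a0). right; ring.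
Qed.

Lemma Zterm_cmp k m : k <> [] -> Cmod (Zterm k alpha m) <= Zr a (rev k) m.
Proof.
  intros Hk. unfold Zterm, Zr.
  assert (Ek : k = removelast k ++ [last k 0%nat]) by (apply app_removelast_last; auto).
  assert (E1 : hd 0%nat (rev k) = last k 0%nat). { rewrite Ek at 1. rewrite rev_app_distr. reflexivity. }
  assert (E2 : tl (rev k) = rev (removelast k)). { rewrite Ek at 1. rewrite rev_app_distr. reflexivity. }
  rewrite E1, E2.
  rewrite !Cmod_mult. unfold Cdiv, cfact. rewrite Cmod_mult, Cmod_inv by apply poch_nz.
  rewrite Cmod_R, Rabs_right by apply Rle_ge, pos_INR.
  pose proof (lower_cmp (rev (removelast k)) m m ltac:(lia)).
  pose proof (Cmod_invpow m (pred (last k 0%nat))).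
  pose proof (Cmod_ge_0 (poch alpha (S m))).
  assert (0 < Cmod (poch alpha (S m))) by (apply Cmod_gt_0, poch_nz).
  pose proof (pochR_pos a (S m) Ha). pose proof (lt_0_INR _ (lt_O_fact m)).
  pose proof (Cmod_ge_0 (lower alpha (rev (removelast k)) m)).
  pose proof (Cmod_ge_0 (Cinv (Cpow (Cplus (RtoC (INR m)) alpha) (pred (last k 0%nat))))).
  unfold pref. unfold Rdiv.
  set (P := Cmod (poch alpha (S m))) in *. set (Q := pochR a (S m)) in *.
  set (W := wlow _ _ _) in *. set (Lw := Cmod (lower _ _ _)) in *.
  set (X := Cmod (Cinv _)) in *.
  assert (HLW : Lw / P <= W / Q).
  { apply Rmult_le_reg_r with (P * Q). nra. unfold Rdiv.
    replace (Lw * / P * (P * Q)) with (Lw * Q) by (field; lra).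
    replace (W * / Q * (P * Q)) with (W * P) by (field; lra). auto. }
  unfold Rdiv in HLW.
  apply Rle_trans with (INR (fact m) * X * (Lw * / P)). right; ring.
  apply Rle_trans with (INR (fact m) * xx a m ^ pred (last k 0%nat) * (W * / Q)). 2: right; ring.
  apply Rmult_le_compat; auto. apply Rmult_le_pos; auto. lra.
  apply Rmult_le_pos; auto. apply Rlt_le, Rinv_0_lt_compat; auto.
  apply Rmult_le_compat_l; lra.
Qed.

End Cx.

Lemma pochR_mono c d j : 0 < c <= d -> pochR c j <= pochR d j.
Proof.
  intros H. induction j; simpl. lra. pose proof (pochR_pos c j ltac:(lra)). pose proof (pos_INR j).
  apply Rmult_le_compat; lra.
Qed.

Lemma pochR_shift e m : pochR e (S m) = e * pochR (e + 1) m.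
Proof.
  induction m. simpl. ring.
  change (pochR e (S (S m))) with (pochR e (S m) * (e + INR (S m))).
  rewrite IHm. cbn [pochR]. rewrite S_INR. ring.
Qed.

Section Maj.
Variables a r : R.
Hypothesis Ha : 0 < a.
Hypothesis Hr : 0 <= r < a.
Definition cc := a - r.
Definition ee := cc * cc / (cc + 1).
Definition kap := 1 + / a.
Definition yy (j : nat) : R := / (INR j + cc).
Definition Wac (j : nat) : R := pochR a j / pochR cc j.
Definition TT (j : nat) : R := pochR (ee + 1) j / INR (fact j).
Definition SS (j : nat) : R := Wac j * TT j.
Definition Phi (g : nat -> R) (j : nat) : R := Wac j * ssum (fun m => g m / ((INR m + a) * Wac m)) j.

Lemma cc_pos : 0 < cc. Proof. unfold cc; lra. Qed.
Lemma ee_pos : 0 < ee. Proof. unfold ee; pose proof cc_pos. apply Rdiv_lt_0_compat; nra. Qed.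
Lemma ee_lt : ee < cc.
Proof. unfold ee; pose proof cc_pos. apply Rmult_lt_reg_r with (cc + 1). lra.
  unfold Rdiv. rewrite Rmult_assoc, Rinv_l by lra. nra. Qed.
Lemma ee_gt : cc <= ee + 1.
Proof. unfold ee; pose proof cc_pos. apply Rmult_le_reg_r with (cc + 1). lra.
  rewrite Rmult_plus_distr_r. unfold Rdiv. rewrite Rmult_assoc, Rinv_l by lra. nra. Qed.
Lemma kap_pos : 0 < kap. Proof. unfold kap. pose proof (Rinv_0_lt_compat a Ha). lra. Qed.
Lemma kap_bound m : INR m + 1 <= kap * (INR m + a).
Proof.
  unfold kap. pose proof (pos_INR m). assert (/a*a=1) by (field; lra). pose proof (Rinv_0_lt_compat a Ha). nra.
Qed.

Lemma yy_pos j : 0 < yy j.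
Proof. unfold yy; pose proof cc_pos; pose proof (pos_INR j); apply Rinv_0_lt_compat; lra. Qed.
Lemma Wac_pos j : 0 < Wac j.
Proof. unfold Wac. apply Rdiv_lt_0_compat; apply pochR_pos; auto. apply cc_pos. Qed.
Lemma TT_pos j : 0 < TT j.
Proof. unfold TT. apply Rdiv_lt_0_compat. apply pochR_pos. pose proof ee_pos; lra. apply lt_0_INR, lt_O_fact. Qed.
Lemma SS_pos j : 0 < SS j.
Proof. unfold SS. apply Rmult_lt_0_compat. apply Wac_pos. apply TT_pos. Qed.
Lemma xx_le_yy j : xx a j <= yy j.
Proof. unfold xx, yy, cc. pose proof (pos_INR j). apply Rinv_le_contravar; lra. Qed.
Lemma xx_le_inv j : xx a j <= / a.
Proof. unfold xx. pose proof (pos_INR j). apply Rinv_le_contravar; lra. Qed.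

Lemma Phi_eq g j : Phi g j = ssum (fun m => yy m * g m) j + ssum (fun m => r * yy m * Phi g m) j.
Proof.
  induction j. unfold Phi. rewrite !ssum_0. lra.
  rewrite !ssum_S.
  enough (Phi g (S j) = Phi g j + yy j * g j + r * yy j * Phi g j) by lra.
  unfold Phi. rewrite ssum_S. unfold Wac. simpl pochR. unfold yy.
  pose proof (pochR_pos a j Ha). pose proof (pochR_pos cc j cc_pos). pose proof cc_pos. pose proof (pos_INR j).
  unfold cc in *. field. repeat split; lra.
Qed.

Lemma Phi_nonneg g j : (forall m, 0 <= g m) -> 0 <= Phi g j.
Proof.
  intros H. unfold Phi. apply Rmult_le_pos. apply Rlt_le, Wac_pos. apply ssum_nonneg. intros.
  apply Rdiv_le_0_compat; auto. apply Rmult_lt_0_compat. pose proof (pos_INR i); lra. apply Wac_pos.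
Qed.

Lemma Phi_mono g h j : (forall m, g m <= h m) -> Phi g j <= Phi h j.
Proof.
  intros H. unfold Phi. apply Rmult_le_compat_l. apply Rlt_le, Wac_pos. apply ssum_le. intros.
  unfold Rdiv. apply Rmult_le_compat_r; auto. apply Rlt_le, Rinv_0_lt_compat, Rmult_lt_0_compat.
  pose proof (pos_INR i); lra. apply Wac_pos.
Qed.

Lemma TT_S j : TT (S j) = TT j + ee * TT j / (INR j + 1).
Proof.
  unfold TT. simpl pochR. rewrite fact_simpl, mult_INR, S_INR.
  pose proof (lt_0_INR _ (lt_O_fact j)). pose proof (pos_INR j). field. lra.
Qed.

Lemma sum_TT j : ssum (fun m => TT m / (INR m + a)) j <= kap / ee * (TT j - 1).
Proof.
  induction j. rewrite ssum_0. unfold TT. simpl. unfold Rdiv. rewrite Rinv_1. lra.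
  rewrite ssum_S, TT_S. pose proof ee_pos. pose proof kap_pos. pose proof (TT_pos j).
  pose proof (kap_bound j). pose proof (pos_INR j).
  assert (TT j / (INR j + a) <= kap / ee * (ee * TT j / (INR j + 1))).
  { unfold Rdiv. replace (kap * / ee * (ee * TT j * / (INR j + 1))) with (TT j * (kap / (INR j + 1))) by (field; lra).
    apply Rmult_le_compat_l. lra.
    apply Rle_trans with ((INR j + 1) * / (INR j + 1) * / (INR j + a)).
    right; field; lra.
    apply Rle_trans with (kap * (INR j + a) * / (INR j + 1) * / (INR j + a)). 2: right; field; lra.
    apply Rmult_le_compat_r. apply Rlt_le, Rinv_0_lt_compat; lra.
    apply Rmult_le_compat_r. apply Rlt_le, Rinv_0_lt_compat; lra. lra. }
  lra.
Qed.

Lemma Phi_SS g A j : 0 <= A -> (forall m, g m <= A * SS m) -> Phi g j <= A * (kap / ee) * SS j.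
Proof.
  intros HA H. apply Rle_trans with (Phi (fun m => A * SS m) j). apply Phi_mono; auto.
  unfold Phi, SS. pose proof (Wac_pos j).
  rewrite (ssum_ext _ (fun m => A * (TT m / (INR m + a)))).
  2:{ intros i _. pose proof (Wac_pos i). pose proof (pos_INR i). field. lra. }
  rewrite ssum_scal.
  pose proof (sum_TT j). pose proof kap_pos. pose proof ee_pos. pose proof (TT_pos j).
  assert (A * ssum (fun m => TT m / (INR m + a)) j <= A * (kap / ee * TT j)).
  { apply Rmult_le_compat_l; auto. assert (0 <= kap / ee) by (apply Rlt_le, Rdiv_lt_0_compat; auto). nra. }
  apply Rle_trans with (Wac j * (A * (kap / ee * TT j))). apply Rmult_le_compat_l; lra. right; ring.
Qed.

Lemma uu_SS j : uu a j <= SS j.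
Proof.
  unfold uu, SS, Wac, TT. pose proof (pochR_pos a j Ha). pose proof (pochR_pos cc j cc_pos).
  pose proof (lt_0_INR _ (lt_O_fact j)). pose proof (pochR_mono cc (ee + 1) j (conj cc_pos ee_gt)).
  apply Rle_trans with (pochR a j / pochR cc j * pochR cc j / INR (fact j)).
  right; field; lra. unfold Rdiv. rewrite !Rmult_assoc. apply Rmult_le_compat_l. lra.
  apply Rmult_le_compat_l. apply Rlt_le, Rinv_0_lt_compat; lra.
  apply Rmult_le_compat_r. apply Rlt_le, Rinv_0_lt_compat; lra. lra.
Qed.

Definition Bfin := kap * (1 + ee) / ee * / (cc - ee).

Lemma fin_term m : pref a m * yy m * SS m <= kap * (1 + ee) / ee * (pochR ee m / pochR cc (S m)).
Proof.
  pose proof ee_pos. pose proof cc_pos. pose proof kap_pos. pose proof (pos_INR m).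
  pose proof (pochR_pos a m Ha). pose proof (pochR_pos cc m cc_pos). pose proof (pochR_pos ee m ee_pos).
  pose proof (lt_0_INR _ (lt_O_fact m)).
  assert (E1 : pochR (ee + 1) m = pochR ee m * (ee + INR m) / ee).
  { pose proof (pochR_shift ee m). simpl in H7. rewrite H7. field. lra. }
  assert (E : pref a m * yy m * SS m = pochR ee m * (ee + INR m) / (ee * (INR m + a) * pochR cc (S m))).
  { unfold pref, yy, SS, Wac, TT. rewrite E1. simpl pochR. field. repeat split; lra. }
  rewrite E. simpl pochR.
  pose proof (kap_bound m).
  assert (ee + INR m <= (1 + ee) * (kap * (INR m + a))).
  { apply Rle_trans with ((1 + ee) * (INR m + 1)). nra. apply Rmult_le_compat_l; lra. }
  apply Rle_trans with ((1 + ee) * (kap * (INR m + a)) * pochR ee m / (ee * (INR m + a) * (pochR cc m * (cc + INR m)))).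
  unfold Rdiv. rewrite (Rmult_comm (pochR ee m) (ee + INR m)). apply Rmult_le_compat_r.
  apply Rlt_le, Rinv_0_lt_compat. apply Rmult_lt_0_compat. nra. nra.
  apply Rmult_le_compat_r; lra.
  right; field; repeat split; lra.
Qed.

Lemma fin_tel M : ssum (fun m => pochR ee m / pochR cc (S m)) M <= / (cc - ee) * (1 - pochR ee M / pochR cc M).
Proof.
  pose proof ee_pos. pose proof cc_pos. pose proof ee_lt.
  induction M. rewrite ssum_0. simpl. unfold Rdiv. rewrite Rinv_1. lra.
  rewrite ssum_S. pose proof (pochR_pos cc M cc_pos). pose proof (pochR_pos ee M ee_pos). pose proof (pos_INR M).
  enough (pochR ee M / pochR cc (S M) = / (cc - ee) * (pochR ee M / pochR cc M - pochR ee (S M) / pochR cc (S M))) by lra.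
  simpl pochR. field. repeat split; lra.
Qed.

Lemma fin_sum M : ssum (fun m => pref a m * yy m * SS m) M <= Bfin.
Proof.
  pose proof ee_pos. pose proof cc_pos. pose proof ee_lt. pose proof kap_pos.
  apply Rle_trans with (ssum (fun m => kap * (1 + ee) / ee * (pochR ee m / pochR cc (S m))) M).
  apply ssum_le; intros; apply fin_term.
  rewrite ssum_scal. unfold Bfin. apply Rmult_le_compat_l.
  apply Rlt_le, Rdiv_lt_0_compat; nra.
  eapply Rle_trans. apply fin_tel. pose proof (pochR_pos cc M cc_pos). pose proof (pochR_pos ee M ee_pos).
  assert (0 <= pochR ee M / pochR cc M) by (apply Rlt_le, Rdiv_lt_0_compat; lra).
  assert (0 < / (cc - ee)) by (apply Rinv_0_lt_compat; lra). nra.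
Qed.

Lemma geo_x m e0 L : (1 <= e0)%nat ->
  ssum (fun j => r ^ j * xx a m ^ (e0 + j)) L <= xx a m ^ (e0 - 1) * yy m.
Proof.
  intros He. pose proof (xx_pos a m Ha). pose proof (pos_INR m). pose proof cc_pos.
  assert (Hq : 0 <= r * xx a m < 1).
  { split. apply Rmult_le_pos; lra. unfold xx. apply Rmult_lt_reg_r with (INR m + a). lra.
    rewrite Rmult_assoc, Rinv_l by lra. lra. }
  rewrite (ssum_ext _ (fun j => xx a m ^ e0 * (r * xx a m) ^ j)).
  2:{ intros. rewrite pow_add, Rpow_mult_distr. ring. }
  rewrite ssum_scal. pose proof (ssum_geom _ L Hq).
  destruct e0 as [|e1]; [lia|]. replace (S e1 - 1)%nat with e1 by lia. simpl (xx a m ^ S e1).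
  pose proof (pow_le (xx a m) e1 ltac:(lra)).
  apply Rle_trans with (xx a m * xx a m ^ e1 * / (1 - r * xx a m)).
  apply Rmult_le_compat_l. nra. auto.
  right. unfold yy, xx, cc. field. repeat split; try lra.
Qed.

Lemma xpow_le e j : (1 <= e)%nat -> xx a j ^ e <= (/ a) ^ (e - 1) * yy j.
Proof.
  intros He. destruct e as [|e1]; [lia|]. replace (S e1 - 1)%nat with e1 by lia. simpl (xx a j ^ S e1).
  pose proof (xx_pos a j Ha). pose proof (xx_le_yy j). pose proof (xx_le_inv j).
  rewrite Rmult_comm. apply Rmult_le_compat; auto. apply pow_le; lra. lra.
  apply pow_incr; lra.
Qed.

Lemma Y_le_Phi g j : (forall m, 0 <= g m) -> ssum (fun m => yy m * g m) j <= Phi g j.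
Proof.
  intros H. rewrite Phi_eq. assert (0 <= ssum (fun m => r * yy m * Phi g m) j).
  apply ssum_nonneg. intros. apply Rmult_le_pos. apply Rmult_le_pos. lra. apply Rlt_le, yy_pos.
  apply Phi_nonneg; auto. lra.
Qed.

Definition hat (e : nat) : nat -> R := fun j => xx a j ^ (e - 1) * yy j.

Lemma hat_pos e j : 0 <= hat e j.
Proof. unfold hat. apply Rmult_le_pos. apply pow_le, Rlt_le, xx_pos; auto. apply Rlt_le, yy_pos. Qed.
Lemma hat_le e j : hat e j <= (/ a) ^ (e - 1) * yy j.
Proof. unfold hat. apply Rmult_le_compat_r. apply Rlt_le, yy_pos. apply pow_incr.
  split. apply Rlt_le, xx_pos; auto. apply xx_le_inv. Qed.

Lemma ssum_swap (g : nat -> nat -> R) n L :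
  ssum (fun j => ssum (g j) n) L = ssum (fun p => ssum (fun j => g j p) L) n.
Proof. unfold ssum. apply lsum_swap. Qed.

Lemma wlow_app ws1 ws2 g m : wlow (ws1 ++ ws2) g m = wlow ws1 (wlow ws2 g) m.
Proof. revert m; induction ws1; intros m; simpl; auto. apply ssum_ext; intros; rewrite IHws1; auto. Qed.

Lemma wlow_ext ws g h m : (forall j, g j = h j) -> wlow ws g m = wlow ws h m.
Proof. revert m; induction ws; intros m H; simpl; auto. apply ssum_ext; intros; rewrite IHws; auto. Qed.

Lemma wlow_mono ws g h m : (forall w, In w ws -> forall j, 0 <= w j) -> (forall j, g j <= h j) ->
  wlow ws g m <= wlow ws h m.
Proof.
  revert m; induction ws; intros m Hw H; simpl; auto. apply ssum_le. intros i _.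
  apply Rmult_le_compat_l. apply Hw; simpl; auto. apply IHws; auto. intros; apply Hw; simpl; auto.
Qed.

Lemma wlow_lsum {A} ws (f : A -> nat -> R) s m :
  wlow ws (fun j => lsum (fun x => f x j) s) m = lsum (fun x => wlow ws (f x) m) s.
Proof.
  revert m; induction ws; intros m; simpl; auto.
  rewrite (ssum_ext _ (fun j => lsum (fun x => a0 j * wlow ws (f x) j) s)).
  unfold ssum. apply lsum_swap.
  intros i _. rewrite IHws, lsum_scal. reflexivity.
Qed.

Lemma wlow_scal ws c g m : wlow ws (fun j => c * g j) m = c * wlow ws g m.
Proof.
  revert m; induction ws; intros m; simpl; auto. rewrite <- ssum_scal. apply ssum_ext; intros.
  rewrite IHws. ring.
Qed.

Lemma map_hat_nonneg ks : forall w, In w (map hat ks) -> forall j, 0 <= w j.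
Proof. intros w Hw j. apply in_map_iff in Hw. destruct Hw as [e [<- _]]. apply hat_pos. Qed.
Lemma map_xpow_nonneg ks : forall w, In w (map (xpow a) ks) -> forall j, 0 <= w j.
Proof. intros w Hw j. apply in_map_iff in Hw. destruct Hw as [e [<- _]]. apply pow_le, Rlt_le, xx_pos; auto. Qed.

Lemma lemB' ks L g m : List.Forall (fun x => (1 <= x)%nat) ks -> (forall j, 0 <= g j) ->
  lsum (fun t => r ^ list_sum t * wlow (map (xpow a) (addl ks t)) g m) (boxl (length ks) L)
  <= wlow (map hat ks) g m.
Proof.
  revert m; induction ks as [|e ks IH]; intros m Hks Hg.
  - simpl. lra.
  - inversion Hks; subst. simpl length. rewrite lsum_box_S. cbn [addl map wlow list_sum].
    rewrite (ssum_ext _ (fun j => ssum (fun p => r ^ j * xpow a (e + j) p *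
        lsum (fun t => r ^ list_sum t * wlow (map (xpow a) (addl ks t)) g p) (boxl (length ks) L)) m)).
    2:{ intros j _. symmetry.
        rewrite (ssum_ext _ (fun p => lsum (fun t => r ^ j * xpow a (e + j) p * (r ^ list_sum t * wlow (map (xpow a) (addl ks t)) g p)) (boxl (length ks) L))).
        2:{ intros p _. rewrite lsum_scal. reflexivity. }
        rewrite ssum_lsum_swap. apply lsum_ext. intros t _. simpl list_sum. rewrite pow_add, <- ssum_scal. apply ssum_ext. intros; ring. }
    rewrite ssum_swap. apply ssum_le. intros p _.
    rewrite <- ssum_scal_r.
    assert (0 <= lsum (fun t => r ^ list_sum t * wlow (map (xpow a) (addl ks t)) g p) (boxl (length ks) L)).
    { apply lsum_nonneg. intros. apply Rmult_le_pos. apply pow_le; lra. apply wlow_nonneg; auto. apply map_xpow_nonneg. }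
    apply Rmult_le_compat; auto. apply ssum_nonneg; intros. apply Rmult_le_pos. apply pow_le; lra.
    apply pow_le, Rlt_le, xx_pos; auto.
    unfold xpow. apply (geo_x p e L); auto.
Qed.

Lemma lemB kr L m : (2 <= hd 0%nat kr)%nat -> List.Forall (fun x => (1 <= x)%nat) (tl kr) ->
  lsum (fun t => r ^ list_sum t * Zr a (addl kr t) m) (boxl (length kr) L)
  <= pref a m * xx a m ^ (hd 0%nat kr - 2) * yy m * wlow (map hat (tl kr)) (uu a) m.
Proof.
  intros Hk Hks. destruct kr as [|K ks]. simpl in Hk; lia. cbn [hd tl] in Hk, Hks |- *. change (length (K :: ks)) with (S (length ks)).
  rewrite lsum_box_S. unfold Zr. cbn [addl hd tl].
  rewrite (ssum_ext _ (fun j => pref a m * (r ^ j * xx a m ^ (pred K - 1 + 1 + j)) *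
     lsum (fun t => r ^ list_sum t * wlow (map (xpow a) (addl ks t)) (uu a) m) (boxl (length ks) L))).
  2:{ intros j _. rewrite <- !lsum_scal. apply lsum_ext. intros t _. simpl list_sum.
      replace (pred (K + j)) with (pred K - 1 + 1 + j)%nat by lia. rewrite pow_add. ring. }
  rewrite <- ssum_scal_r, ssum_scal.
  pose proof (lemB' ks L (uu a) m Hks (fun j => Rlt_le _ _ (uu_pos a j Ha))).
  pose proof (geo_x m (pred K - 1 + 1) L ltac:(lia)).
  replace (pred K - 1 + 1 - 1)%nat with (K - 2)%nat in H0 by lia.
  pose proof (pref_pos a m Ha).
  assert (0 <= lsum (fun t => r ^ list_sum t * wlow (map (xpow a) (addl ks t)) (uu a) m) (boxl (length ks) L)).
  { apply lsum_nonneg. intros. apply Rmult_le_pos. apply pow_le; lra. apply wlow_nonneg; auto. apply map_xpow_nonneg.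
    intros; apply Rlt_le, uu_pos; auto. }
  rewrite Rmult_assoc. rewrite (Rmult_assoc (pref a m)). rewrite (Rmult_assoc (pref a m)).
  apply Rmult_le_compat_l. lra.
  apply Rmult_le_compat; auto. apply ssum_nonneg; intros. apply Rmult_le_pos. apply pow_le; lra.
  apply pow_le, Rlt_le, xx_pos; auto.
Qed.

Lemma ones_sum G h L j : (forall j, 0 <= G j) -> (forall j, 0 <= h j) ->
  (forall j, G j + ssum (fun p => r * yy p * h p) j <= h j) ->
  ssum (fun i => r ^ i * wlow (repeat (hat 1) i) G j) L <= h j.
Proof.
  intros HG Hh H. revert j; induction L; intros j.
  - rewrite ssum_0. auto.
  - rewrite ssum_Sl. cbn [repeat wlow pow]. rewrite Rmult_1_l.
    rewrite (ssum_ext _ (fun i => ssum (fun p => r * hat 1 p * (r ^ i * wlow (repeat (hat 1) i) G p)) j)).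
    2:{ intros i _. cbn [repeat wlow pow]. rewrite <- ssum_scal. apply ssum_ext. intros; ring. }
    rewrite ssum_swap. eapply Rle_trans. 2: apply (H j). apply Rplus_le_compat_l.
    apply ssum_le. intros p _. rewrite ssum_scal. replace (hat 1 p) with (yy p) by (unfold hat; simpl; ring).
    apply Rmult_le_compat_l.
    apply Rmult_le_pos. lra. apply Rlt_le, yy_pos. apply IHL.
Qed.

Lemma ins_ones_nonnil k is : k <> [] -> ins_ones k is <> [].
Proof. destruct k as [|x [|y k]]; simpl; congruence. Qed.

Lemma lemC k : k <> [] -> List.Forall (fun x => (1 <= x)%nat) k -> exists D, (0 <= D) /\ 
  (forall g A L m, 0 <= A -> (forall j, 0 <= g j <= A * SS j) ->
  lsum (fun is => r ^ list_sum is * wlow (map hat (rev (removelast (ins_ones k is)))) g m)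
       (boxl (pred (length k)) L) <= A * D * SS m).
Proof.
  induction k as [|x k IH]; intros Hk Hf. congruence.
  inversion Hf; subst. destruct k as [|y k].
  - exists 1. split. lra. intros g A L m HA Hg. simpl. rewrite Rmult_1_l, Rmult_1_r, Rplus_0_r. apply Hg.
  - destruct (IH ltac:(congruence) H2) as [D' [HD' IH']].
    exists ((/ a) ^ (x - 1) * (kap / ee) * D'). split.
    { apply Rmult_le_pos; auto. apply Rmult_le_pos. apply pow_le, Rlt_le, Rinv_0_lt_compat; auto.
      apply Rlt_le, Rdiv_lt_0_compat. apply kap_pos. apply ee_pos. }
    intros g A L m HA Hg.
    change (pred (length (x :: y :: k))) with (S (pred (length (y :: k)))).
    rewrite lsum_box_S.
    set (R0 := y :: k) in *.
    assert (Hrl : forall i is', rev (removelast (ins_ones (x :: R0) (i :: is'))) =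
       rev (removelast (ins_ones R0 is')) ++ repeat 1%nat i ++ [x]).
    { intros i is'. change (ins_ones (x :: R0) (i :: is')) with (x :: repeat 1%nat i ++ ins_ones R0 is').
      assert (ins_ones R0 is' <> []) by (apply ins_ones_nonnil; unfold R0; congruence).
      assert (E: removelast (x :: repeat 1%nat i ++ ins_ones R0 is') = x :: repeat 1%nat i ++ removelast (ins_ones R0 is')).
      { change (x :: repeat 1%nat i ++ ins_ones R0 is') with ((x :: repeat 1%nat i) ++ ins_ones R0 is').
        rewrite removelast_app by auto. reflexivity. }
      rewrite E. simpl. rewrite rev_app_distr, rev_repeat, <- app_assoc. reflexivity. }
    set (G' := fun j => ssum (fun i => r ^ i * wlow (repeat (hat 1) i) (wlow [hat x] g) j) L).
    rewrite (ssum_ext _ (fun i => lsum (fun is' => r ^ list_sum is' * (r ^ i *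
         wlow (map hat (rev (removelast (ins_ones R0 is')))) (wlow (repeat (hat 1) i) (wlow [hat x] g)) m))
         (boxl (pred (length R0)) L))).
    2:{ intros i _. apply lsum_ext. intros is' _. rewrite Hrl. simpl list_sum. rewrite pow_add.
        rewrite !map_app, !wlow_app. rewrite map_repeat.
        rewrite (wlow_ext _ (wlow (repeat (hat 1) i ++ map hat [x]) g) (wlow (repeat (hat 1) i) (wlow [hat x] g))).
        ring. intros; apply wlow_app. }
    rewrite ssum_lsum_swap.
    rewrite (lsum_ext _ (fun is' => r ^ list_sum is' * wlow (map hat (rev (removelast (ins_ones R0 is')))) G' m)).
    2:{ intros is' _. rewrite ssum_scal. f_equal. unfold G'. unfold ssum. rewrite wlow_lsum.
        apply lsum_ext. intros. rewrite wlow_scal. reflexivity. }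
    set (h := Phi (fun p => (/ a) ^ (x - 1) * g p)).
    assert (Hpa : 0 <= (/ a) ^ (x - 1)) by (apply pow_le, Rlt_le, Rinv_0_lt_compat; auto).
    assert (HG0 : forall j, 0 <= wlow [hat x] g j).
    { intros j. apply wlow_nonneg. intros w [<-|[]]; apply hat_pos. intros; apply Hg. }
    assert (Hh0 : forall j, 0 <= h j). { intros j. apply Phi_nonneg. intros; apply Rmult_le_pos; auto; apply Hg. }
    assert (HG'h : forall j, G' j <= h j).
    { intros j. apply ones_sum; auto. intros j0. unfold h at 2. rewrite Phi_eq.
      apply Rplus_le_compat_r. simpl. apply ssum_le. intros p _.
      pose proof (hat_le x p). pose proof (Hg p). pose proof (yy_pos p). nra. }
    assert (Hh : forall j, h j <= (/ a) ^ (x - 1) * A * (kap / ee) * SS j).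
    { intros j. apply Phi_SS. nra. intros m0. rewrite Rmult_assoc. apply Rmult_le_compat_l; auto. apply Hg. }
    assert (HG'0 : forall j, 0 <= G' j).
    { intros j. apply ssum_nonneg. intros. apply Rmult_le_pos. apply pow_le; lra. apply wlow_nonneg; auto.
      intros w Hw. apply repeat_spec in Hw. subst. apply hat_pos. }
    eapply Rle_trans. apply (IH' G' ((/ a) ^ (x - 1) * A * (kap / ee)) L m).
    { apply Rmult_le_pos. nra. apply Rlt_le, Rdiv_lt_0_compat. apply kap_pos. apply ee_pos. }
    { intros j; split; auto. eapply Rle_trans; eauto. }
    right; ring.
Qed.

End Maj.

Lemma dbl (r : R) (N1 : nat) (N2 : list nat -> nat) (F : list nat -> list nat -> R) L :
  0 <= r -> (forall u t, 0 <= F u t) ->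
  ssum (fun l => r ^ l * ssum (fun i => lsum (fun u => lsum (fun t => F u t) (comps (N2 u) (l - i))) (comps N1 i)) (S l)) L
  <= lsum (fun u => r ^ list_sum u * lsum (fun t => r ^ list_sum t * F u t) (boxl (N2 u) L)) (boxl N1 L).
Proof.
  intros Hr HF.
  set (G := fun i s => r ^ i * r ^ s * lsum (fun u => lsum (fun t => F u t) (comps (N2 u) s)) (comps N1 i)).
  rewrite (ssum_ext _ (fun l => ssum (fun i => G i (l - i)%nat) (S l))).
  2:{ intros l _. rewrite <- ssum_scal. apply ssum_ext. intros i Hi. unfold G.
      rewrite <- pow_add. replace (i + (l - i))%nat with l by lia. reflexivity. }
  eapply Rle_trans. apply ssum_tri_le.
  { intros; unfold G. apply Rmult_le_pos. apply Rmult_le_pos; apply pow_le; lra.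
    apply lsum_nonneg; intros; apply lsum_nonneg; auto. }
  unfold G.
  rewrite (ssum_ext _ (fun i => lsum (fun u => r ^ list_sum u *
             ssum (fun s => lsum (fun t => r ^ list_sum t * F u t) (comps (N2 u) s)) L) (comps N1 i))).
  2:{ intros i _. rewrite (ssum_ext _ (fun s => lsum (fun u => r ^ list_sum u *
          lsum (fun t => r ^ list_sum t * F u t) (comps (N2 u) s)) (comps N1 i))).
      rewrite ssum_lsum_swap. apply lsum_ext. intros u _. rewrite ssum_scal. reflexivity.
      intros s _. rewrite <- lsum_scal. apply lsum_ext. intros u Hu.
      apply comps_prop in Hu. destruct Hu as [_ Hu]. rewrite Hu.
      rewrite Rmult_assoc. f_equal. rewrite <- lsum_scal. apply lsum_ext. intros t Ht.
      apply comps_prop in Ht. destruct Ht as [_ Ht]. rewrite Ht. reflexivity. }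
  eapply Rle_trans.
  apply (comps_box (fun u => r ^ list_sum u * ssum (fun s => lsum (fun t => r ^ list_sum t * F u t) (comps (N2 u) s)) L) N1 L).
  { intros u. apply Rmult_le_pos. apply pow_le; lra. apply ssum_nonneg; intros. apply lsum_nonneg; intros.
    apply Rmult_le_pos; auto. apply pow_le; lra. }
  apply lsum_le. intros u _. apply Rmult_le_compat_l. apply pow_le; lra.
  apply (comps_box (fun t => r ^ list_sum t * F u t)). intros; apply Rmult_le_pos; auto; apply pow_le; lra.
Qed.

Lemma length_addl k t : length (addl k t) = length k.
Proof. revert t; induction k; intros [|y t]; simpl; auto. Qed.

Lemma addl_app k1 k2 t1 t2 : length k1 = length t1 -> addl (k1 ++ k2) (t1 ++ t2) = addl k1 t1 ++ addl k2 t2.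
Proof.
  revert t1; induction k1; intros [|y t1] H; simpl in *; try congruence.
  rewrite IHk1; auto.
Qed.

Lemma rev_addl k t : length t = length k -> rev (addl k t) = addl (rev k) (rev t).
Proof.
  revert t; induction k; intros [|y t] H; simpl in *; try congruence.
  rewrite addl_app. simpl. rewrite IHk; auto. rewrite !length_rev; auto. lia.
Qed.

Lemma list_sum_rev t : list_sum (rev t) = list_sum t.
Proof. induction t; simpl; auto. rewrite list_sum_app. simpl. lia. Qed.

Lemma Forall_removelast (P : nat -> Prop) l : List.Forall P l -> List.Forall P (removelast l).
Proof.
  intros H. destruct l. simpl; auto.
  rewrite (app_removelast_last 0%nat (l:=n :: l)) in H by congruence.
  apply Forall_app in H. tauto.
Qed.

Lemma Forall_ins k is : List.Forall (fun x => (1 <= x)%nat) k -> List.Forall (fun x => (1 <= x)%nat) (ins_ones k is).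
Proof.
  revert is; induction k as [|x k IH]; intros is H. simpl; auto.
  inversion H; subst. destruct k as [|y k]. simpl; auto.
  change (ins_ones (x :: y :: k) is) with (x :: repeat 1%nat (hd 0%nat is) ++ ins_ones (y :: k) (tl is)).
  constructor; auto. apply Forall_app. split. apply Forall_forall. intros z Hz. apply repeat_spec in Hz. lia.
  apply IH; auto.
Qed.

Lemma last_app_nn (l l' : list nat) d : l' <> [] -> last (l ++ l') d = last l' d.
Proof.
  intros H. rewrite (app_removelast_last d H), app_assoc, !last_last. reflexivity.
Qed.

Lemma last_ins k is : last (ins_ones k is) 0%nat = last k 0%nat.
Proof.
  revert is; induction k as [|x k IH]; intros is. reflexivity.
  destruct k as [|y k]. reflexivity.
  change (ins_ones (x :: y :: k) is) with ((x :: repeat 1%nat (hd 0%nat is)) ++ ins_ones (y :: k) (tl is)).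
  rewrite last_app_nn by (apply ins_ones_nonnil; congruence). rewrite IH. reflexivity.
Qed.

Lemma blocks_sum bl u : length u = list_sum bl -> list_sum (blocks bl u) = list_sum u.
Proof.
  revert u; induction bl; intros u H; simpl in *.
  destruct u; simpl in *; auto; lia.
  rewrite IHbl. rewrite <- (firstn_skipn a u) at 3. rewrite list_sum_app. reflexivity.
  rewrite length_skipn. lia.
Qed.

Lemma blocks_length bl u : length (blocks bl u) = length bl.
Proof. revert u; induction bl; intros; simpl; auto. Qed.

Lemma blens_length k : k <> [] -> length (blens k) = length k.
Proof.
  intros H. unfold blens. rewrite length_app, length_map. simpl.
  rewrite (app_removelast_last 0%nat H) at 2. rewrite length_app. simpl. reflexivity.
Qed.

Lemma hd_rev (k : list nat) : k <> [] -> hd 0%nat (rev k) = last k 0%nat.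
Proof. intros H. rewrite (app_removelast_last 0%nat H) at 1. rewrite rev_app_distr. reflexivity. Qed.
Lemma tl_rev (k : list nat) : k <> [] -> tl (rev k) = rev (removelast k).
Proof. intros H. rewrite (app_removelast_last 0%nat H) at 1. rewrite rev_app_distr. reflexivity. Qed.

Section Main.
Variables a r : R.
Hypothesis Ha : 0 < a.
Hypothesis Hr : 0 <= r < a.

Lemma wlow_scale ks d g m : length d = length ks -> (forall j, 0 <= g j) ->
  wlow (map (xpow a) (addl ks d)) g m <= (/ a) ^ list_sum d * wlow (map (xpow a) ks) g m.
Proof.
  revert d m; induction ks as [|e ks IH]; intros [|j d] m Hl Hg; simpl in Hl; try congruence.
  - simpl. lra.
  - cbn [addl map wlow list_sum]. rewrite <- ssum_scal. apply ssum_le. intros p _.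
    unfold xpow at 1 3. rewrite pow_add.
    pose proof (IH d p ltac:(lia) Hg).
    assert (0 <= xx a p ^ e) by (apply pow_le, Rlt_le, xx_pos; auto).
    assert (xx a p ^ j <= (/ a) ^ j) by (apply pow_incr; split; [apply Rlt_le, xx_pos; auto| apply (xx_le_inv a Ha)]).
    assert (0 <= xx a p ^ j) by (apply pow_le, Rlt_le, xx_pos; auto).
    assert (0 <= wlow (map (xpow a) (addl ks d)) g p) by (apply wlow_nonneg; auto; apply map_xpow_nonneg; auto).
    idtac.
    apply Rle_trans with (xx a p ^ e * (/ a) ^ j * ((/ a) ^ list_sum d * wlow (map (xpow a) ks) g p)).
    apply Rmult_le_compat; auto. apply Rmult_le_pos; auto. apply Rmult_le_compat_l; auto. simpl list_sum. rewrite pow_add. right; ring.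
Qed.

Lemma Zr_scale k d m : k <> [] -> length d = length k -> (1 <= last k 0%nat)%nat ->
  Zr a (rev (addl k d)) m <= (/ a) ^ list_sum d * Zr a (rev k) m.
Proof.
  intros Hk Hl Hlast. rewrite rev_addl by auto. rewrite <- list_sum_rev.
  assert (E: rev k = hd 0%nat (rev k) :: tl (rev k)).
  { destruct (rev k) eqn:E. apply (f_equal (@rev nat)) in E. rewrite rev_involutive in E. simpl in E. congruence. reflexivity. }
  rewrite hd_rev in E by auto. rewrite E.
  assert (Ed: exists j d', rev d = j :: d').
  { destruct (rev d) eqn:E2. apply (f_equal (@length nat)) in E2. rewrite length_rev in E2. simpl in E2.
    destruct k; simpl in *; congruence. eauto. }
  destruct Ed as [j [d' Ed]]. rewrite Ed. cbn [addl list_sum]. unfold Zr. cbn [hd tl].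
  assert (Hl' : length d' = length (tl (rev k))).
  { apply (f_equal (@length nat)) in Ed. rewrite length_rev in Ed. simpl in Ed.
    rewrite tl_rev, length_rev by auto. rewrite (app_removelast_last 0%nat Hk) in Hl. rewrite length_app in Hl. simpl in Hl. lia. }
  pose proof (wlow_scale (tl (rev k)) d' (uu a) m Hl' (fun j => Rlt_le _ _ (uu_pos a j Ha))).
  replace (pred (last k 0%nat + j)) with (pred (last k 0%nat) + j)%nat by lia. rewrite pow_add.
  pose proof (pref_pos a m Ha).
  assert (0 <= xx a m ^ pred (last k 0%nat)) by (apply pow_le, Rlt_le, xx_pos; auto).
  assert (xx a m ^ j <= (/ a) ^ j) by (apply pow_incr; split; [apply Rlt_le, xx_pos; auto| apply (xx_le_inv a Ha)]).
  assert (0 <= xx a m ^ j) by (apply pow_le, Rlt_le, xx_pos; auto).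
  assert (0 <= wlow (map (xpow a) (addl (tl (rev k)) d')) (uu a) m) by (apply wlow_nonneg; [apply map_xpow_nonneg; auto| intros; apply Rlt_le, uu_pos; auto]).
  set (P := pref a m) in *. set (X1 := xx a m ^ pred (last k 0%nat)) in *. set (X2 := xx a m ^ j) in *.
  set (W := wlow (map (xpow a) (addl (tl (rev k)) d')) (uu a) m) in *.
  set (W' := wlow (map (xpow a) (tl (rev k))) (uu a) m) in *.
  assert (0 <= P * X1) by (apply Rmult_le_pos; lra).
  apply Rle_trans with ((P * X1) * X2 * W). right; ring.
  apply Rle_trans with ((P * X1) * (/ a) ^ j * W). apply Rmult_le_compat_r; auto. apply Rmult_le_compat_l; auto.
  apply Rle_trans with ((P * X1) * (/ a) ^ j * ((/ a) ^ list_sum d' * W')).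
  apply Rmult_le_compat_l; auto. apply Rmult_le_pos; auto. apply pow_le, Rlt_le, Rinv_0_lt_compat; auto.
  right. simpl list_sum. rewrite pow_add. ring.
Qed.

Lemma lemB_rev k' L m : k' <> [] -> (2 <= last k' 0%nat)%nat -> List.Forall (fun x => (1 <= x)%nat) k' ->
  lsum (fun t => r ^ list_sum t * Zr a (rev (addl k' t)) m) (boxl (length k') L)
  <= pref a m * xx a m ^ (last k' 0%nat - 2) * yy a r m * wlow (map (hat a r) (rev (removelast k'))) (uu a) m.
Proof.
  intros Hk Hl Hf.
  assert (E : lsum (fun t => r ^ list_sum t * Zr a (rev (addl k' t)) m) (boxl (length k') L)
     = lsum (fun t => r ^ list_sum t * Zr a (addl (rev k') t) m) (boxl (length k') L)).
  { transitivity (lsum (fun t => (fun t => r ^ list_sum t * Zr a (addl (rev k') t) m) (rev t)) (boxl (length k') L)).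
    apply lsum_ext. intros t Ht. apply box_length in Ht. rewrite rev_addl by auto. rewrite list_sum_rev. reflexivity.
    apply (lsum_box_rev (fun t => r ^ list_sum t * Zr a (addl (rev k') t) m)). }
  rewrite E. rewrite <- length_rev.
  rewrite <- hd_rev, <- tl_rev by auto.
  apply lemB; auto. rewrite hd_rev; auto. rewrite tl_rev by auto. apply Forall_rev, Forall_removelast; auto.
Qed.

Lemma wlow_adm ks : List.Forall (fun x => (1 <= x)%nat) ks -> exists A, 0 <= A /\ forall m,
  wlow (map (xpow a) ks) (uu a) m <= A * SS a r m.
Proof.
  induction ks as [|e ks IH]; intros Hf.
  - exists 1. split. lra. intros m. simpl. rewrite Rmult_1_l. apply (uu_SS a r Ha Hr).
  - inversion Hf; subst. destruct (IH H2) as [A [HA IHA]].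
    exists ((/ a) ^ (e - 1) * A * (kap a / ee a r)). split.
    { apply Rmult_le_pos. apply Rmult_le_pos; auto. apply pow_le, Rlt_le, Rinv_0_lt_compat; auto.
      apply Rlt_le, Rdiv_lt_0_compat. apply (kap_pos a Ha). apply (ee_pos a r Hr). }
    intros m. cbn [map wlow].
    assert (Hp : 0 <= (/ a) ^ (e - 1)) by (apply pow_le, Rlt_le, Rinv_0_lt_compat; auto).
    apply Rle_trans with (ssum (fun p => yy a r p * ((/ a) ^ (e - 1) * A * SS a r p)) m).
    { apply ssum_le. intros p _. unfold xpow. pose proof (xpow_le a r Ha Hr e p H1).
      pose proof (IHA p). assert (0 <= wlow (map (xpow a) ks) (uu a) p) by
        (apply wlow_nonneg; [apply map_xpow_nonneg; auto|intros; apply Rlt_le, uu_pos; auto]).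
      pose proof (yy_pos a r Hr p). pose proof (SS_pos a r Ha Hr p).
      assert (0 <= xx a p ^ e) by (apply pow_le, Rlt_le, xx_pos; auto).
      apply Rle_trans with ((/ a) ^ (e - 1) * yy a r p * (A * SS a r p)).
      apply Rmult_le_compat; auto. right; ring. }
    eapply Rle_trans. apply Y_le_Phi; auto. intros; apply Rmult_le_pos. nra. apply Rlt_le, SS_pos; auto.
    apply Phi_SS; auto. nra. intros; lra.
Qed.

Lemma Zr_adm kr : (2 <= hd 0%nat kr)%nat -> List.Forall (fun x => (1 <= x)%nat) (tl kr) ->
  exists C, 0 <= C /\ forall m, Zr a kr m <= C * (pref a m * yy a r m * SS a r m).
Proof.
  intros Hh Hf. destruct (wlow_adm _ Hf) as [A [HA HAm]].
  exists ((/ a) ^ (pred (hd 0%nat kr) - 1) * A). split.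
  apply Rmult_le_pos; auto. apply pow_le, Rlt_le, Rinv_0_lt_compat; auto.
  intros m. unfold Zr. pose proof (xpow_le a r Ha Hr (pred (hd 0%nat kr)) m ltac:(lia)).
  pose proof (pref_pos a m Ha). pose proof (HAm m).
  assert (0 <= wlow (map (xpow a) (tl kr)) (uu a) m) by
        (apply wlow_nonneg; [apply map_xpow_nonneg; auto|intros; apply Rlt_le, uu_pos; auto]).
  assert (0 <= xx a m ^ pred (hd 0%nat kr)) by (apply pow_le, Rlt_le, xx_pos; auto).
  pose proof (yy_pos a r Hr m). pose proof (SS_pos a r Ha Hr m).
  apply Rle_trans with (pref a m * ((/ a) ^ (pred (hd 0%nat kr) - 1) * yy a r m) * (A * SS a r m)).
  apply Rmult_le_compat; auto. apply Rmult_le_pos; lra. apply Rmult_le_compat_l; lra.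
  right; ring.
Qed.

Definition adm (k : list nat) : Prop :=
  k <> [] /\ List.Forall (fun x => (1 <= x)%nat) k /\ (2 <= last k 0%nat)%nat.

Lemma adm_of k : admissible k -> adm k.
Proof.
  intros [H1 [H2 H3]]. split; auto. split; auto. apply Forall_forall. auto.
Qed.

Lemma main1_pt k : adm k -> exists C, 0 <= C /\ forall L m,
  ssum (fun l => r ^ l * ssum (fun i => lsum (fun is => lsum (fun t => Zr a (rev (addl (ins_ones k is) t)) m)
       (comps (length (ins_ones k is)) (l - i))) (comps (pred (length k)) i)) (S l)) L
  <= C * (pref a m * yy a r m * SS a r m).
Proof.
  intros [Hk [Hf Hl]].
  destruct (lemC a r Ha Hr k Hk Hf) as [D [HD HC]].
  exists ((/ a) ^ (last k 0%nat - 2) * D). split.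
  apply Rmult_le_pos; auto. apply pow_le, Rlt_le, Rinv_0_lt_compat; auto.
  intros L m.
  eapply Rle_trans. apply (dbl r (pred (length k)) (fun is => length (ins_ones k is))
     (fun is t => Zr a (rev (addl (ins_ones k is) t)) m)). lra. intros; apply Zr_nonneg; auto.
  eapply Rle_trans.
  apply lsum_le with (g := fun is => r ^ list_sum is * (pref a m * xx a m ^ (last k 0%nat - 2) * yy a r m *
     wlow (map (hat a r) (rev (removelast (ins_ones k is)))) (uu a) m)).
  { intros is _. apply Rmult_le_compat_l. apply pow_le; lra.
    pose proof (lemB_rev (ins_ones k is) L m (ins_ones_nonnil k is Hk)). rewrite last_ins in H.
    apply H; auto. apply Forall_ins; auto. }
  rewrite (lsum_ext _ (fun is => (pref a m * xx a m ^ (last k 0%nat - 2) * yy a r m) *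
     (r ^ list_sum is * wlow (map (hat a r) (rev (removelast (ins_ones k is)))) (uu a) m))).
  2:{ intros; ring. }
  rewrite lsum_scal.
  pose proof (HC (uu a) 1 L m ltac:(lra)).
  assert (H1 : forall j, 0 <= uu a j <= 1 * SS a r j).
  { intros j. split. apply Rlt_le, uu_pos; auto. rewrite Rmult_1_l. apply uu_SS; auto. }
  specialize (H H1).
  pose proof (pref_pos a m Ha). pose proof (yy_pos a r Hr m). pose proof (SS_pos a r Ha Hr m).
  assert (Hx : xx a m ^ (last k 0%nat - 2) <= (/ a) ^ (last k 0%nat - 2)).
  { apply pow_incr. split. apply Rlt_le, xx_pos; auto. apply (xx_le_inv a Ha). }
  assert (0 <= xx a m ^ (last k 0%nat - 2)) by (apply pow_le, Rlt_le, xx_pos; auto).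
  assert (0 <= lsum (fun is => r ^ list_sum is * wlow (map (hat a r) (rev (removelast (ins_ones k is)))) (uu a) m)
       (boxl (pred (length k)) L)).
  { apply lsum_nonneg. intros. apply Rmult_le_pos. apply pow_le; lra. apply wlow_nonneg.
    apply map_hat_nonneg; auto. intros; apply Rlt_le, uu_pos; auto. }
  apply Rle_trans with ((pref a m * (/ a) ^ (last k 0%nat - 2) * yy a r m) * (1 * D * SS a r m)).
  apply Rmult_le_compat; auto. apply Rmult_le_pos; [|lra]. apply Rmult_le_pos; lra.
  apply Rmult_le_compat_r. lra. apply Rmult_le_compat_l; lra.
  right; ring.
Qed.

Lemma addl_assoc (k b t : list nat) : length b = length k -> length t = length k ->
  addl (addl k b) t = addl k (addl b t).
Proof.
  revert b t; induction k; intros [|x b] [|y t] H1 H2; simpl in *; try congruence.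
  rewrite IHk by lia. f_equal. lia.
Qed.

Lemma list_sum_addl (b t : list nat) : length b = length t -> list_sum (addl b t) = (list_sum b + list_sum t)%nat.
Proof.
  revert t; induction b; intros [|y t] H; simpl in *; try lia.
  rewrite IHb by lia. lia.
Qed.

Lemma main2_pt k L m : adm k ->
  ssum (fun l => r ^ l * ssum (fun i => lsum (fun u => lsum (fun t => Zr a (rev (addl (addl k (blocks (blens k) u)) t)) m)
       (comps (length (addl k (blocks (blens k) u))) (l - i))) (comps (list_sum (blens k)) i)) (S l)) L
  <= (/ (1 - r / a)) ^ (list_sum (blens k) + length k) * Zr a (rev k) m.
Proof.
  intros [Hk [Hf Hl]].
  set (q := r / a).
  assert (Hq : 0 <= q < 1).
  { unfold q. split. apply Rdiv_le_0_compat; lra. apply Rmult_lt_reg_r with a; auto. unfold Rdiv.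
    rewrite Rmult_assoc, Rinv_l; lra. }
  eapply Rle_trans. apply (dbl r (list_sum (blens k)) (fun u => length (addl k (blocks (blens k) u)))
     (fun u t => Zr a (rev (addl (addl k (blocks (blens k) u)) t)) m)). lra. intros; apply Zr_nonneg; auto.
  set (Z := Zr a (rev k) m). assert (HZ : 0 <= Z) by (apply Zr_nonneg; auto).
  eapply Rle_trans.
  apply lsum_le with (g := fun u => lsum (fun t => q ^ list_sum u * q ^ list_sum t * Z) (boxl (length k) L)).
  { intros u Hu. apply box_length in Hu. rewrite length_addl. rewrite <- lsum_scal. apply lsum_le.
    intros t Ht. apply box_length in Ht.
    assert (Hb : length (blocks (blens k) u) = length k) by (rewrite blocks_length, blens_length; auto).
    rewrite addl_assoc by lia.
    pose proof (Zr_scale k (addl (blocks (blens k) u) t) m Hk ltac:(rewrite length_addl; lia) ltac:(lia)).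
    rewrite list_sum_addl in H by lia. rewrite blocks_sum in H by lia.
    fold Z in H. unfold q. rewrite !Rdiv_def, !Rpow_mult_distr. rewrite pow_add in H.
    apply Rle_trans with (r ^ list_sum u * (r ^ list_sum t * ((/ a) ^ list_sum u * (/ a) ^ list_sum t * Z))).
    apply Rmult_le_compat_l. apply pow_le; lra. apply Rmult_le_compat_l. apply pow_le; lra. auto.
    right; ring. }
  rewrite (lsum_ext _ (fun u => q ^ list_sum u * (Z * (ssum (fun j => q ^ j) L) ^ length k))).
  2:{ intros u _. rewrite <- box_geom, <- !lsum_scal. apply lsum_ext. intros; ring. }
  rewrite (lsum_ext _ (fun u => (Z * (ssum (fun j => q ^ j) L) ^ length k) * q ^ list_sum u)) by (intros; ring).
  rewrite lsum_scal, box_geom. rewrite pow_add.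
  pose proof (ssum_geom q L Hq). assert (0 <= ssum (fun j => q ^ j) L) by (apply ssum_nonneg; intros; apply pow_le; lra).
  assert (ssum (fun j => q ^ j) L ^ length k <= (/ (1 - q)) ^ length k) by (apply pow_incr; lra).
  assert (ssum (fun j => q ^ j) L ^ list_sum (blens k) <= (/ (1 - q)) ^ list_sum (blens k)) by (apply pow_incr; lra).
  assert (0 <= ssum (fun j => q ^ j) L ^ length k) by (apply pow_le; lra).
  assert (0 <= ssum (fun j => q ^ j) L ^ list_sum (blens k)) by (apply pow_le; lra).
  assert (0 <= (/ (1 - q)) ^ length k) by lra.
  apply Rle_trans with (Z * (/ (1 - q)) ^ length k * (/ (1 - q)) ^ list_sum (blens k)).
  apply Rmult_le_compat; auto. apply Rmult_le_pos; auto. apply Rmult_le_compat_l; auto.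
  right; ring.
Qed.

End Main.

Lemma sum_n_ssum f n : sum_n f n = ssum f (S n).
Proof.
  induction n. rewrite sum_O. unfold ssum; simpl. lra.
  rewrite sum_Sn, IHn, (ssum_S f (S n)). reflexivity.
Qed.

Lemma Series_zero : Series (fun _ => 0) = 0.
Proof.
  rewrite (Series_ext _ (fun n => 0 * 0)) by (intros; ring).
  rewrite (Series_scal_l 0 (fun _ => 0)). ring.
Qed.

Lemma ex_series_zero : ex_series (fun _ : nat => 0).
Proof. exists 0. apply filterlim_ext with (fun _ => 0). intros n. rewrite sum_n_ssum. rewrite ssum_zero. reflexivity.
  apply filterlim_const. Qed.

Lemma lsum_Series {A} (f : A -> nat -> R) s : (forall x, In x s -> ex_series (f x)) ->
  ex_series (fun m => lsum (fun x => f x m) s) /\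
  Series (fun m => lsum (fun x => f x m) s) = lsum (fun x => Series (f x)) s.
Proof.
  induction s; intros H; simpl.
  - split. apply ex_series_zero. apply Series_zero.
  - destruct IHs as [E1 E2]. intros; apply H; simpl; auto.
    assert (E0 : ex_series (f a)) by (apply H; simpl; auto).
    split. apply (ex_series_plus (f a) _ E0 E1).
    rewrite Series_plus; auto. rewrite E2. reflexivity.
Qed.

Lemma ssum_Series (f : nat -> nat -> R) n : (forall i, (i < n)%nat -> ex_series (f i)) ->
  ex_series (fun m => ssum (fun i => f i m) n) /\
  Series (fun m => ssum (fun i => f i m) n) = ssum (fun i => Series (f i)) n.
Proof.
  intros H. apply lsum_Series. intros x Hx. apply in_seq in Hx. apply H. lia.
Qed.

Lemma ex_series_scal_R c (f : nat -> R) : ex_series f -> ex_series (fun m => c * f m).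
Proof. intros H. apply (ex_series_scal_l c f H). Qed.

Lemma series_bounded (f : nat -> R) B : (forall m, 0 <= f m) -> (forall M, ssum f M <= B) ->
  ex_series f /\ Series f <= B.
Proof.
  intros H0 HB.
  assert (Hl : ex_finite_lim_seq (sum_n f)).
  { apply ex_finite_lim_seq_incr with B. intros n. rewrite !sum_n_ssum, (ssum_S f (S n)). specialize (H0 (S n)). lra.
    intros n. rewrite sum_n_ssum. auto. }
  destruct Hl as [l Hl].
  assert (Hs : is_series f l) by exact Hl.
  split. exists l; auto.
  rewrite (is_series_unique f l Hs).
  assert (Rbar_le l B). apply (is_lim_seq_le (sum_n f) (fun _ => B) l B). intros; rewrite sum_n_ssum; auto.
  auto. apply is_lim_seq_const. simpl in H. auto.
Qed.

Lemma ex_series_dom (f g : nat -> R) : (forall m, 0 <= f m <= g m) -> ex_series g -> ex_series f.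
Proof.
  intros H Hg. apply (ex_series_le f g); auto. intros n. change (norm (f n)) with (Rabs (f n)).
  rewrite Rabs_right. apply H. apply Rle_ge, H.
Qed.

Lemma ex_series_shift (f : nat -> R) n : ex_series f -> ex_series (fun k => f (k + n)%nat).
Proof.
  intros H. induction n.
  - revert H. apply ex_series_ext. intros; f_equal; lia.
  - apply ex_series_incr_1 in IHn. revert IHn. apply ex_series_ext. intros; f_equal; lia.
Qed.

Lemma Series_shift (f : nat -> R) n : ex_series f -> Series f = ssum f n + Series (fun k => f (k + n)%nat).
Proof.
  intros H. induction n.
  - rewrite ssum_0. rewrite Rplus_0_l. apply Series_ext. intros; f_equal; lia.
  - rewrite IHn. rewrite (Series_incr_1 (fun k => f (k + n)%nat)) by (apply ex_series_shift; auto).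
    rewrite (ssum_S f n). simpl (0 + n)%nat. rewrite Rplus_assoc. f_equal. f_equal.
    apply Series_ext. intros; f_equal; lia.
Qed.

Lemma tail_bound (a M : nat -> R) n : ex_series M -> (forall l, Rabs (a l) <= M l) ->
  ex_series a /\ Rabs (Series a - ssum a n) <= Series M - ssum M n.
Proof.
  intros HM H.
  assert (Ha : ex_series (fun l => Rabs (a l))).
  { apply ex_series_dom with M; auto. intros; split; auto. apply Rabs_pos. }
  assert (Ha' : ex_series a) by (apply ex_series_Rabs; auto).
  split; auto.
  rewrite (Series_shift a n Ha'), (Series_shift M n HM).
  replace (ssum a n + Series (fun k => a (k + n)%nat) - ssum a n) with (Series (fun k => a (k + n)%nat)) by ring.
  replace (ssum M n + Series (fun k => M (k + n)%nat) - ssum M n) with (Series (fun k => M (k + n)%nat)) by ring.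
  eapply Rle_trans. apply Series_Rabs. apply (ex_series_shift (fun l => Rabs (a l))); auto.
  apply Series_le. intros; split. apply Rabs_pos. auto. apply ex_series_shift; auto.
Qed.

Lemma tail_small M : ex_series M -> forall eps, 0 < eps -> exists N, forall n, (N <= n)%nat -> Series M - ssum M n < eps.
Proof.
  intros HM eps Heps. pose proof (Series_correct M HM) as H. apply is_series_Reals in H.
  destruct (H eps Heps) as [N HN]. exists (S N). intros n Hn.
  destruct n. lia. specialize (HN n ltac:(lia)). unfold R_dist in HN.
  rewrite <- sum_n_ssum. rewrite sum_n_Reals. apply Rabs_lt_between' in HN. lra.
Qed.

Lemma Cmod_le_sum (z : C) : Cmod z <= Rabs (fst z) + Rabs (snd z).
Proof.
  destruct z as [x y]. unfold Cmod. simpl.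
  rewrite <- (sqrt_Rsqr (Rabs x + Rabs y)) by (pose proof (Rabs_pos x); pose proof (Rabs_pos y); lra).
  apply sqrt_le_1_alt. unfold Rsqr. pose proof (pow2_abs x). pose proof (pow2_abs y). simpl in *.
  pose proof (Rabs_pos x); pose proof (Rabs_pos y). nra.
Qed.

Lemma im_le_Cmod (z : C) : Rabs (snd z) <= Cmod z.
Proof.
  destruct z as [x y]. unfold Cmod. simpl. rewrite <- sqrt_Rsqr_abs. apply sqrt_le_1_alt.
  unfold Rsqr. nra.
Qed.

Lemma fst_clsum {A} (f : A -> C) s : fst (clsum (map f s)) = lsum (fun x => fst (f x)) s.
Proof. induction s; simpl; auto. rewrite <- IHs. reflexivity. Qed.
Lemma snd_clsum {A} (f : A -> C) s : snd (clsum (map f s)) = lsum (fun x => snd (f x)) s.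
Proof. induction s; simpl; auto. rewrite <- IHs. reflexivity. Qed.

Lemma unif_M (K : C -> Prop) (a : nat -> C -> C) (M : nat -> R) :
  ex_series M -> (forall z, K z -> forall l, Cmod (a l z) <= M l) -> unif_conv_series K a.
Proof.
  intros HM H.
  exists (fun z => (Series (fun l => fst (a l z)), Series (fun l => snd (a l z)))).
  intros eps Heps. destruct (tail_small M HM (eps / 2) ltac:(lra)) as [N HN].
  exists N. intros n Hn z Hz.
  eapply Rle_lt_trans. apply Cmod_le_sum.
  destruct (tail_bound (fun l => fst (a l z)) M n HM) as [_ H1].
  { intros l. eapply Rle_trans. apply (re_le_Cmod (a l z)). auto. }
  destruct (tail_bound (fun l => snd (a l z)) M n HM) as [_ H2].
  { intros l. eapply Rle_trans. apply (im_le_Cmod (a l z)). auto. }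
  specialize (HN n Hn). unfold csum.
  simpl. rewrite fst_clsum, snd_clsum. fold (ssum (fun l => fst (a l z)) n). fold (ssum (fun l => snd (a l z)) n).
  unfold Rminus in H1, H2. lra.
Qed.

Lemma abs_M (a : nat -> C) (M : nat -> R) : ex_series M -> (forall l, Cmod (a l) <= M l) ->
  ex_series (fun l => Cmod (a l)).
Proof. intros HM H. apply ex_series_dom with M; auto. intros; split; auto. apply Cmod_ge_0. Qed.

Lemma Cmod_Zfun k alpha (Z : nat -> R) : ex_series Z -> (forall m, Cmod (Zterm k alpha m) <= Z m) ->
  Cmod (Zfun k alpha) <= 2 * Series Z.
Proof.
  intros HZ H. unfold Zfun. eapply Rle_trans. apply Cmod_le_sum. cbn [fst snd].
  assert (E1 : ex_series (fun m => Rabs (fst (Zterm k alpha m)))).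
  { apply ex_series_dom with Z; auto. intros; split. apply Rabs_pos. eapply Rle_trans. apply re_le_Cmod. auto. }
  assert (E2 : ex_series (fun m => Rabs (snd (Zterm k alpha m)))).
  { apply ex_series_dom with Z; auto. intros; split. apply Rabs_pos. eapply Rle_trans. apply im_le_Cmod. auto. }
  pose proof (Series_Rabs _ E1). pose proof (Series_Rabs _ E2). cbv beta in H0, H1.
  assert (Series (fun m => Rabs (fst (Zterm k alpha m))) <= Series Z).
  { apply Series_le; auto. intros; split. apply Rabs_pos. eapply Rle_trans. apply re_le_Cmod. auto. }
  assert (Series (fun m => Rabs (snd (Zterm k alpha m))) <= Series Z).
  { apply Series_le; auto. intros; split. apply Rabs_pos. eapply Rle_trans. apply im_le_Cmod. auto. }
  lra.
Qed.

Lemma open_disk (b : C) (rad : R) : open (fun z => Cmod (Cminus z b) < rad).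
Proof.
  intros x Hx. apply (locally_le_locally_norm (x : C)).
  set (d := (rad - Cmod (Cminus x b)) / 2).
  assert (Hd : 0 < d) by (unfold d; lra).
  exists (mkposreal d Hd). intros y Hy. unfold ball_norm in Hy. simpl in Hy.
  change (norm (minus y x)) with (Cmod (Cminus y x)) in Hy.
  replace (Cminus y b) with (Cplus (Cminus y x) (Cminus x b)) by ring.
  eapply Rle_lt_trans. apply Cmod_triangle. unfold d in Hy. lra.
Qed.

Lemma nested_Series (c : R) (n : nat) (S1 : nat -> list (list nat)) (S2 : nat -> list nat -> list (list nat))
  (F : list nat -> list nat -> nat -> R) :
  (forall i u t, (i < n)%nat -> In u (S1 i) -> In t (S2 i u) -> ex_series (F u t)) ->
  ex_series (fun m => c * ssum (fun i => lsum (fun u => lsum (fun t => F u t m) (S2 i u)) (S1 i)) n) /\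
  Series (fun m => c * ssum (fun i => lsum (fun u => lsum (fun t => F u t m) (S2 i u)) (S1 i)) n)
  = c * ssum (fun i => lsum (fun u => lsum (fun t => Series (F u t)) (S2 i u)) (S1 i)) n.
Proof.
  intros H.
  assert (Hin : forall i u, (i < n)%nat -> In u (S1 i) ->
     ex_series (fun m => lsum (fun t => F u t m) (S2 i u)) /\
     Series (fun m => lsum (fun t => F u t m) (S2 i u)) = lsum (fun t => Series (F u t)) (S2 i u)).
  { intros i u Hi Hu. apply lsum_Series. intros t Ht. apply (H i u t); auto. }
  assert (Hmid : forall i, (i < n)%nat ->
     ex_series (fun m => lsum (fun u => lsum (fun t => F u t m) (S2 i u)) (S1 i)) /\
     Series (fun m => lsum (fun u => lsum (fun t => F u t m) (S2 i u)) (S1 i)) =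
       lsum (fun u => lsum (fun t => Series (F u t)) (S2 i u)) (S1 i)).
  { intros i Hi. destruct (lsum_Series (fun u m => lsum (fun t => F u t m) (S2 i u)) (S1 i)) as [E1 E2].
    intros u Hu. apply Hin; auto. split; auto. rewrite E2. apply lsum_ext. intros u Hu. apply Hin; auto. }
  destruct (ssum_Series (fun i m => lsum (fun u => lsum (fun t => F u t m) (S2 i u)) (S1 i)) n) as [E1 E2].
  intros i Hi. apply Hmid; auto.
  split. apply ex_series_scal_R; auto.
  rewrite Series_scal_l. f_equal. rewrite E2. apply ssum_ext. intros i Hi. apply Hmid; auto.
Qed.

Lemma Series_nonneg (f : nat -> R) : ex_series f -> (forall m, 0 <= f m) -> 0 <= Series f.
Proof. intros H H0. rewrite <- Series_zero. apply Series_le; auto. intros n; split; [lra|apply H0]. Qed.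

Lemma addl_nonnil (k t : list nat) : k <> [] -> addl k t <> [].
Proof. intros H E. apply (f_equal (@length nat)) in E. rewrite length_addl in E. destruct k; simpl in *; congruence. Qed.

Section Core.
Variables (k : list nat) (beta : C) (a0 r0 : R).
Hypothesis Hk : adm k.
Hypothesis Ha : 0 < a0.
Hypothesis Hr : 0 <= r0 < a0.

Definition Fin (m : nat) : R := pref a0 m * yy a0 r0 m * SS a0 r0 m.
Lemma Fin_nonneg m : 0 <= Fin m.
Proof. unfold Fin. pose proof (pref_pos a0 m Ha). pose proof (yy_pos a0 r0 Hr m). pose proof (SS_pos a0 r0 Ha Hr m).
  apply Rmult_le_pos; [apply Rmult_le_pos|]; lra. Qed.
Lemma Fin_ex : ex_series Fin /\ Series Fin <= Bfin a0 r0.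
Proof. apply series_bounded. apply Fin_nonneg. intros M. apply (fin_sum a0 r0 Ha Hr). Qed.

Lemma dom_ex (f : nat -> R) C : (forall m, 0 <= f m <= C * Fin m) -> ex_series f.
Proof. intros H. apply ex_series_dom with (fun m => C * Fin m); auto. apply ex_series_scal_R. apply Fin_ex. Qed.

Definition Zc1 (is t : list nat) (m : nat) : R := Zr a0 (rev (addl (ins_ones k is) t)) m.
Definition Zc2 (u t : list nat) (m : nat) : R := Zr a0 (rev (addl (addl k (blocks (blens k) u)) t)) m.

Lemma Zc1_ex is t : length t = length (ins_ones k is) -> ex_series (Zc1 is t).
Proof.
  intros Hl. pose proof Hk as Hk'; destruct Hk' as [Hk0 [Hf Hlast]].
  assert (Hn : ins_ones k is <> []) by (apply ins_ones_nonnil; auto).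
  destruct (Zr_adm a0 r0 Ha Hr (rev (ins_ones k is))) as [C [HC HCm]].
  { rewrite hd_rev, last_ins by auto. auto. }
  { rewrite tl_rev by auto. apply Forall_rev, Forall_removelast, Forall_ins; auto. }
  apply dom_ex with ((/ a0) ^ list_sum t * C). intros m. split. apply Zr_nonneg; auto.
  unfold Zc1. eapply Rle_trans. apply Zr_scale; auto. rewrite last_ins; lia.
  rewrite Rmult_assoc. apply Rmult_le_compat_l. apply pow_le, Rlt_le, Rinv_0_lt_compat; auto. apply HCm.
Qed.

Lemma Zc2_ex u t : length t = length k -> ex_series (Zc2 u t).
Proof.
  intros Hl. pose proof Hk as Hk'; destruct Hk' as [Hk0 [Hf Hlast]].
  destruct (Zr_adm a0 r0 Ha Hr (rev k)) as [C [HC HCm]].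
  { rewrite hd_rev by auto. auto. }
  { rewrite tl_rev by auto. apply Forall_rev, Forall_removelast; auto. }
  assert (Hb : length (blocks (blens k) u) = length k) by (rewrite blocks_length, blens_length; auto).
  apply dom_ex with ((/ a0) ^ list_sum (addl (blocks (blens k) u) t) * C). intros m. split. apply Zr_nonneg; auto.
  unfold Zc2. rewrite addl_assoc by lia. eapply Rle_trans. apply Zr_scale; auto. rewrite length_addl; lia. lia.
  rewrite Rmult_assoc. apply Rmult_le_compat_l. apply pow_le, Rlt_le, Rinv_0_lt_compat; auto. apply HCm.
Qed.

Definition Q1 (l m : nat) : R := r0 ^ l * ssum (fun i => lsum (fun is => lsum (fun t => Zc1 is t m)
   (comps (length (ins_ones k is)) (l - i))) (comps (pred (length k)) i)) (S l).
Definition Q2 (l m : nat) : R := r0 ^ l * ssum (fun i => lsum (fun u => lsum (fun t => Zc2 u t m)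
   (comps (length (addl k (blocks (blens k) u))) (l - i))) (comps (list_sum (blens k)) i)) (S l).

Lemma Q1_ser l : ex_series (Q1 l) /\ Series (Q1 l) = r0 ^ l * ssum (fun i => lsum (fun is => lsum (fun t => Series (Zc1 is t))
   (comps (length (ins_ones k is)) (l - i))) (comps (pred (length k)) i)) (S l).
Proof.
  apply (nested_Series (r0 ^ l) (S l) (fun i => comps (pred (length k)) i) (fun i is => comps (length (ins_ones k is)) (l - i)) Zc1).
  intros i u t _ _ Ht. apply Zc1_ex. apply comps_prop in Ht. tauto.
Qed.

Lemma Q2_ser l : ex_series (Q2 l) /\ Series (Q2 l) = r0 ^ l * ssum (fun i => lsum (fun u => lsum (fun t => Series (Zc2 u t))
   (comps (length (addl k (blocks (blens k) u))) (l - i))) (comps (list_sum (blens k)) i)) (S l).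
Proof.
  apply (nested_Series (r0 ^ l) (S l) (fun i => comps (list_sum (blens k)) i) (fun i u => comps (length (addl k (blocks (blens k) u))) (l - i)) Zc2).
  intros i u t _ _ Ht. apply Zc2_ex. apply comps_prop in Ht. rewrite length_addl in Ht. tauto.
Qed.

Lemma Q1_nonneg l m : 0 <= Q1 l m.
Proof. unfold Q1. apply Rmult_le_pos. apply pow_le; lra. apply ssum_nonneg; intros. apply lsum_nonneg; intros.
  apply lsum_nonneg; intros. apply Zr_nonneg; auto. Qed.
Lemma Q2_nonneg l m : 0 <= Q2 l m.
Proof. unfold Q2. apply Rmult_le_pos. apply pow_le; lra. apply ssum_nonneg; intros. apply lsum_nonneg; intros.
  apply lsum_nonneg; intros. apply Zr_nonneg; auto. Qed.

Definition M1 (l : nat) : R := 2 * Series (Q1 l).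
Definition M2 (l : nat) : R := 2 * Series (Q2 l).

Lemma M_gen (Q : nat -> nat -> R) C : (forall l, ex_series (Q l)) -> (forall l m, 0 <= Q l m) ->
  (forall L m, ssum (fun l => Q l m) L <= C * Fin m) -> 0 <= C ->
  ex_series (fun l => 2 * Series (Q l)).
Proof.
  intros HQ HQ0 HS HC. apply series_bounded with (2 * (C * Bfin a0 r0)).
  intros l. apply Rmult_le_pos. lra. apply Series_nonneg; auto.
  intros L. rewrite ssum_scal. apply Rmult_le_compat_l. lra.
  destruct (ssum_Series Q L) as [E1 E2]. intros; auto. rewrite <- E2.
  destruct Fin_ex as [F1 F2].
  apply Rle_trans with (Series (fun m => C * Fin m)). apply Series_le. intros m; split; auto.
  apply ssum_nonneg; auto. apply ex_series_scal_R; auto.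
  rewrite Series_scal_l. apply Rmult_le_compat_l; auto.
Qed.

Lemma M1_ex : ex_series M1.
Proof.
  destruct (main1_pt a0 r0 Ha Hr k Hk) as [C [HC HCm]].
  apply (M_gen Q1 C).
  - intros; apply Q1_ser.
  - apply Q1_nonneg.
  - intros L m. unfold Q1, Zc1, Fin. apply HCm.
  - exact HC.
Qed.

Lemma M2_ex : ex_series M2.
Proof.
  pose proof Hk as Hk'; destruct Hk' as [Hk0 [Hf Hlast]].
  destruct (Zr_adm a0 r0 Ha Hr (rev k)) as [C [HC HCm]].
  { rewrite hd_rev by auto. auto. }
  { rewrite tl_rev by auto. apply Forall_rev, Forall_removelast; auto. }
  set (q := / (1 - r0 / a0) ^ (list_sum (blens k) + length k)).
  assert (Hq : 0 <= (/ (1 - r0 / a0)) ^ (list_sum (blens k) + length k)).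
  { apply pow_le. apply Rlt_le, Rinv_0_lt_compat. apply Rmult_lt_reg_r with a0; auto. unfold Rdiv.
    rewrite Rmult_minus_distr_r, Rmult_assoc, Rinv_l; lra. }
  apply (M_gen Q2 ((/ (1 - r0 / a0)) ^ (list_sum (blens k) + length k) * C)).
  - intros; apply Q2_ser.
  - apply Q2_nonneg.
  - intros L m. unfold Q2, Zc2, Fin. eapply Rle_trans. apply main2_pt; auto.
    rewrite Rmult_assoc. apply Rmult_le_compat_l; [exact Hq | apply HCm].
  - apply Rmult_le_pos; auto.
Qed.

Lemma Cpow_bound (alpha : C) l : Cmod (Cminus alpha beta) <= r0 -> Cmod (Cpow (Cminus alpha beta) l) <= r0 ^ l.
Proof. intros H. rewrite Cmod_pow. apply pow_incr. split; auto. apply Cmod_ge_0. Qed.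

Lemma M1_bound alpha : Cmod (Cminus alpha beta) <= r0 -> a0 <= Re alpha -> forall l,
  Cmod (sterm coef1 k beta alpha l) <= M1 l.
Proof.
  intros Hd Hre l. pose proof Hk as Hk'; destruct Hk' as [Hk0 [Hf Hlast]].
  unfold sterm, M1. rewrite Cmod_mult. destruct (Q1_ser l) as [_ E]. rewrite E.
  assert (Hc : Cmod (coef1 k alpha l) <= 2 * ssum (fun i => lsum (fun is => lsum (fun t => Series (Zc1 is t))
     (comps (length (ins_ones k is)) (l - i))) (comps (pred (length k)) i)) (S l)).
  { unfold coef1. eapply Rle_trans. apply Cmod_csum. rewrite <- ssum_scal. apply ssum_le. intros i _.
    eapply Rle_trans. apply Cmod_clsum. rewrite <- lsum_scal. apply lsum_le. intros is _.
    unfold Ssum. eapply Rle_trans. apply Cmod_clsum. rewrite <- lsum_scal. apply lsum_le. intros t Ht.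
    apply comps_prop in Ht. destruct Ht as [Ht _].
    apply Cmod_Zfun. apply Zc1_ex; auto. intros m. unfold Zc1. apply Zterm_cmp; auto.
    apply addl_nonnil, ins_ones_nonnil; auto. }
  pose proof (Cpow_bound alpha l Hd). pose proof (Cmod_ge_0 (coef1 k alpha l)).
  apply Rle_trans with (r0 ^ l * (2 * ssum (fun i => lsum (fun is => lsum (fun t => Series (Zc1 is t))
     (comps (length (ins_ones k is)) (l - i))) (comps (pred (length k)) i)) (S l))).
  apply Rmult_le_compat; auto. apply Cmod_ge_0. right; ring.
Qed.

Lemma M2_bound alpha : Cmod (Cminus alpha beta) <= r0 -> a0 <= Re alpha -> forall l,
  Cmod (sterm coef2 k beta alpha l) <= M2 l.
Proof.
  intros Hd Hre l. pose proof Hk as Hk'; destruct Hk' as [Hk0 [Hf Hlast]].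
  unfold sterm, M2. rewrite Cmod_mult. destruct (Q2_ser l) as [_ E]. rewrite E.
  assert (Hc : Cmod (coef2 k alpha l) <= 2 * ssum (fun i => lsum (fun u => lsum (fun t => Series (Zc2 u t))
     (comps (length (addl k (blocks (blens k) u))) (l - i))) (comps (list_sum (blens k)) i)) (S l)).
  { unfold coef2. eapply Rle_trans. apply Cmod_csum. rewrite <- ssum_scal. apply ssum_le. intros i _.
    eapply Rle_trans. apply Cmod_clsum. rewrite <- lsum_scal. apply lsum_le. intros u _.
    unfold Ssum. eapply Rle_trans. apply Cmod_clsum. rewrite <- lsum_scal. apply lsum_le. intros t Ht.
    apply comps_prop in Ht. destruct Ht as [Ht _]. rewrite length_addl in Ht.
    apply Cmod_Zfun. apply Zc2_ex; auto. intros m. unfold Zc2. apply Zterm_cmp; auto.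
    apply addl_nonnil, addl_nonnil; auto. }
  pose proof (Cpow_bound alpha l Hd). pose proof (Cmod_ge_0 (coef2 k alpha l)).
  apply Rle_trans with (r0 ^ l * (2 * ssum (fun i => lsum (fun u => lsum (fun t => Series (Zc2 u t))
     (comps (length (addl k (blocks (blens k) u))) (l - i))) (comps (list_sum (blens k)) i)) (S l))).
  apply Rmult_le_compat; auto. apply Cmod_ge_0. right; ring.
Qed.

End Core.

Lemma Re_lower (alpha beta : C) : Re beta - Cmod (Cminus alpha beta) <= Re alpha.
Proof.
  pose proof (re_le_Cmod (Cminus alpha beta)).
  assert (E : Re (Cminus alpha beta) = Re alpha - Re beta) by (unfold Re, Cminus; simpl; ring).
  rewrite E in H. apply Rabs_le_between in H. lra.
Qed.

Lemma nat_gt x : exists n : nat, x < INR n.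
Proof.
  destruct (archimed x) as [H _]. destruct (Z_le_gt_dec 0 (up x)).
  - exists (Z.to_nat (up x)). rewrite INR_IZR_INZ, Z2Nat.id by lia. lra.
  - exists 0%nat. simpl. apply Z.gt_lt in g. apply IZR_lt in g. lra.
Qed.

Theorem lemma3p1 (k : list nat) (beta : C) :
  admissible k -> 0 < Re beta ->
  (forall alpha, Dbeta beta alpha ->
     ex_series (fun l => Cmod (sterm coef1 k beta alpha l)) /\
     ex_series (fun l => Cmod (sterm coef2 k beta alpha l))) /\
  (forall K : C -> Prop, compactC K -> (forall z, K z -> Dbeta beta z) ->
     unif_conv_series K (fun l z => sterm coef1 k beta z l) /\
     unif_conv_series K (fun l z => sterm coef2 k beta z l)).
Proof.
  intros Hadm Hb. pose proof (adm_of k Hadm) as Hk.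
  split.
  - intros alpha Hd. unfold Dbeta in Hd.
    set (r0 := Cmod (Cminus alpha beta)) in *. set (a0 := Re beta - r0).
    assert (Ha : 0 < a0) by (unfold a0; pose proof (Cmod_ge_0 (Cminus alpha beta)); fold r0 in H; lra).
    assert (Hr : 0 <= r0 < a0) by (unfold a0; pose proof (Cmod_ge_0 (Cminus alpha beta)); fold r0 in H; lra).
    assert (Hre : a0 <= Re alpha) by (unfold a0, r0; apply Re_lower).
    split.
    + apply abs_M with (M1 k a0 r0). apply M1_ex; auto.
      intros l. apply M1_bound; auto. unfold r0; lra.
    + apply abs_M with (M2 k a0 r0). apply M2_ex; auto.
      intros l. apply M2_bound; auto. unfold r0; lra.
  - intros K HK HKD.
    set (c := Re beta / 2).
    assert (Hc : 0 < c) by (unfold c; lra).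
    destruct (HK nat (fun i z => Cmod (Cminus z beta) < c - c / (INR i + 2))) as [s Hs].
    { intros i. apply open_disk. }
    { intros z Hz. specialize (HKD z Hz). unfold Dbeta in HKD. fold c in HKD.
      set (d := c - Cmod (Cminus z beta)). assert (Hd : 0 < d) by (unfold d; lra).
      destruct (nat_gt (c / d)) as [n Hn]. exists n.
      pose proof (pos_INR n).
      assert (c / (INR n + 2) < d).
      { apply Rmult_lt_reg_r with (INR n + 2). lra. unfold Rdiv. rewrite Rmult_assoc, Rinv_l by lra.
        apply Rmult_lt_compat_r with (r := d) in Hn; auto. unfold Rdiv in Hn. rewrite Rmult_assoc, Rinv_l in Hn by lra. nra. }
      unfold d in H0. lra. }
    set (N := list_max s).
    set (r0 := c - c / (INR N + 2)). set (a0 := Re beta - r0).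
    pose proof (pos_INR N).
    assert (Hcn : 0 < c / (INR N + 2) <= c / 2).
    { split. apply Rdiv_lt_0_compat; lra. unfold Rdiv. apply Rmult_le_compat_l. lra. apply Rinv_le_contravar; lra. }
    assert (Hr : 0 <= r0 < a0) by (unfold a0, r0, c in *; lra).
    assert (Ha : 0 < a0) by lra.
    assert (HKr : forall z, K z -> Cmod (Cminus z beta) <= r0).
    { intros z Hz. destruct (Hs z Hz) as [i [Hi Hiz]].
      assert (HiN : (i <= N)%nat).
      { unfold N. assert (Hf : List.Forall (fun j => (j <= list_max s)%nat) s) by (apply list_max_le; lia).
        rewrite Forall_forall in Hf. apply Hf; auto. }
      apply le_INR in HiN. assert (c / (INR N + 2) <= c / (INR i + 2)).
      { unfold Rdiv. apply Rmult_le_compat_l. lra. apply Rinv_le_contravar. pose proof (pos_INR i); lra. lra. }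
      unfold r0. lra. }
    assert (HKa : forall z, K z -> a0 <= Re z).
    { intros z Hz. pose proof (HKr z Hz). pose proof (Re_lower z beta). unfold a0. lra. }
    split.
    + apply unif_M with (M1 k a0 r0). apply M1_ex; auto.
      intros z Hz l. apply M1_bound; auto.
    + apply unif_M with (M2 k a0 r0). apply M2_ex; auto.
      intros z Hz l. apply M2_bound; auto.
Qed.
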